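(* Let $\mathcal C$ be either a closed convex curve, or a convex arc with total curvature $\int_{\mathcal C}\kappa\,ds\le\pi$, and assume its radius of curvature satisfies $R_1\le\rho\le R_2$ at every point, for constants $0<R_1\le R_2$. Let $\mathcal L$ be a lattice in $\mathbb R^2$ and let $P_1',P_2',P_3'$ be distinct points of $\mathcal L$ with $\mathrm{dist}(P_j',\mathcal C)<\delta$ for $j=1,2,3$, where $\delta>0$ satisfies $$\delta<\frac{d_{\mathcal L}^2}{2\left(R_2+d_{\mathcal L}+\sqrt{(R_2+d_{\mathcal L})^2-d_{\mathcal L}^2}\right)},$$ and let $P_j$ be a point of $\mathcal C$ with $\|P_j-P_j'\|<\delta$ for $j=1,2,3$. Then $$\mathrm{Area}(\triangle P_1P_2P_3)\ge\frac{A_{\mathcal L}}{2}-\big(\|P_2-P_1\|+\|P_3-P_2\|\big)\delta-\frac32\delta^2.$$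
   Context: A lattice is a set $\mathcal L=\mathcal L(v_0,v_1,v_2)=\{v_0+mv_1+nv_2: m,n\in\mathbb Z\}$ where $v_0,v_1,v_2\in\mathbb R^2$ and $v_1,v_2$ are linearly independent; $A_{\mathcal L}=|\det(v_1,v_2)|$ and $d_{\mathcal L}=\min\{\|P-Q\|:P,Q\in\mathcal L,\ P\ne Q\}$. Curves are of class $C^2$ with nonvanishing first and second derivative vectors, oriented so that the curvature $\kappa$ is positive; a convex arc is such a non-closed curve on the boundary of a convex planar region. $\rho=1/\kappa$, $s$ is arclength, and $\mathrm{dist}(P,\mathcal C)$ is the Euclidean distance from $P$ to $\mathcal C$. *)

(* Defs.v *)
From Stdlib Require Import Reals ZArith.
From Coquelicot Require Import Coquelicot.
Open Scope R_scope.

Definition pt := (R * R)%type.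

Definition dist2 (P Q : pt) : R :=
  sqrt ((fst P - fst Q) ^ 2 + (snd P - snd Q) ^ 2).
Definition det2 (u v : pt) : R := fst u * snd v - snd u * fst v.
Definition vsub (P Q : pt) : pt := (fst P - fst Q, snd P - snd Q).

Definition tri_area (P1 P2 P3 : pt) : R :=
  Rabs (det2 (vsub P2 P1) (vsub P3 P1)) / 2.

Definition lattice_pt (v0 v1 v2 : pt) (P : pt) : Prop :=
  exists m n : Z,
    P = (fst v0 + IZR m * fst v1 + IZR n * fst v2,
         snd v0 + IZR m * snd v1 + IZR n * snd v2).

Definition lattice_area (v1 v2 : pt) : R := Rabs (det2 v1 v2).

Definition is_lattice_min_dist (v0 v1 v2 : pt) (d : R) : Prop :=
  (exists P Q, lattice_pt v0 v1 v2 P /\ lattice_pt v0 v1 v2 Q /\ P <> Q /\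
               dist2 P Q = d) /\
  (forall P Q, lattice_pt v0 v1 v2 P -> lattice_pt v0 v1 v2 Q -> P <> Q ->
               d <= dist2 P Q).

Definition convex_set (K : pt -> Prop) : Prop :=
  forall P Q (l : R), K P -> K Q -> 0 <= l <= 1 ->
    K ((1 - l) * fst P + l * fst Q, (1 - l) * snd P + l * snd Q).
Definition boundary (K : pt -> Prop) (P : pt) : Prop :=
  forall e, 0 < e ->
    (exists Q, K Q /\ dist2 P Q < e) /\ (exists Q, ~ K Q /\ dist2 P Q < e).
Definition nonempty_interior (K : pt -> Prop) : Prop :=
  exists P e, 0 < e /\ forall Q, dist2 P Q < e -> K Q.
Definition bounded_set (K : pt -> Prop) : Prop :=
  exists M, forall P, K P -> dist2 P (0, 0) <= M.

Definition C2_param (x y x1 y1 x2 y2 : R -> R) : Prop :=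
  forall t, is_derive x t (x1 t) /\ is_derive y t (y1 t) /\
            is_derive x1 t (x2 t) /\ is_derive y1 t (y2 t) /\
            continuous x2 t /\ continuous y2 t.

Definition regular_on (x1 y1 x2 y2 : R -> R) (a b : R) : Prop :=
  forall t, a <= t <= b -> (x1 t, y1 t) <> (0, 0) /\ (x2 t, y2 t) <> (0, 0).

Definition speed (x1 y1 : R -> R) (t : R) : R := sqrt (x1 t ^ 2 + y1 t ^ 2).

Definition curvature (x1 y1 x2 y2 : R -> R) (t : R) : R :=
  (x1 t * y2 t - y1 t * x2 t) / (speed x1 y1 t ^ 3).

Definition on_curve (x y : R -> R) (a b : R) (P : pt) : Prop :=
  exists t, a <= t <= b /\ P = (x t, y t).

Definition dist_curve (x y : R -> R) (a b : R) (P : pt) : Rbar :=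
  Glb_Rbar (fun r => exists t, a <= t <= b /\ r = dist2 P (x t, y t)).

Definition total_curvature (x1 y1 x2 y2 : R -> R) (a b : R) : R :=
  RInt (fun t => curvature x1 y1 x2 y2 t * speed x1 y1 t) a b.

Definition closed_convex_curve (x y : R -> R) (a b : R) : Prop :=
  a < b /\
  (forall t, x (t + (b - a)) = x t /\ y (t + (b - a)) = y t) /\
  (forall s t, a <= s < b -> a <= t < b -> (x s, y s) = (x t, y t) -> s = t) /\
  exists K : pt -> Prop, convex_set K /\ bounded_set K /\ nonempty_interior K /\
    forall P, boundary K P <-> on_curve x y a b P.

Definition convex_arc (x y : R -> R) (a b : R) : Prop :=
  a < b /\
  (forall s t, a <= s <= b -> a <= t <= b -> (x s, y s) = (x t, y t) -> s = t) /\
  exists K : pt -> Prop, convex_set K /\ nonempty_interior K /\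
    forall t, a <= t <= b -> boundary K (x t, y t).

(* Main.v *)
Require Import Defs.
From Stdlib Require Import Reals ZArith.
From Coquelicot Require Import Coquelicot.
From Stdlib Require Import Lra Psatz Classical.
Open Scope R_scope.

Lemma deriv_cont_pt f x l : is_derive f x l -> continuity_pt f x.
Proof.
  intros H. apply continuity_pt_filterlim.
  apply (ex_derive_continuous f x). exists l; exact H.
Qed.

Lemma mono_deriv (f df : R -> R) p q : p <= q ->
  (forall t, p <= t <= q -> is_derive f t (df t)) ->
  (forall t, p <= t <= q -> 0 <= df t) -> f p <= f q.
Proof.
  intros Hpq Hd Hpos.
  destruct (Req_dec p q) as [->|Hne]; [lra|].
  destruct (MVT_gen f p q df) as [c [Hc Heq]].
  - intros t Ht. apply Hd. unfold Rmin, Rmax in Ht; destruct (Rle_dec p q); lra.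
  - intros t Ht. apply (deriv_cont_pt f t (df t)). apply Hd.
    unfold Rmin, Rmax in Ht; destruct (Rle_dec p q); lra.
  - unfold Rmin, Rmax in Hc; destruct (Rle_dec p q); [|lra].
    assert (0 <= df c) by (apply Hpos; lra). nra.
Qed.

Lemma smono_deriv (f df : R -> R) p q : p < q ->
  (forall t, p <= t <= q -> is_derive f t (df t)) ->
  (forall t, p <= t <= q -> 0 < df t) -> f p < f q.
Proof.
  intros Hpq Hd Hpos.
  destruct (MVT_gen f p q df) as [c [Hc Heq]].
  - intros t Ht. apply Hd. unfold Rmin, Rmax in Ht; destruct (Rle_dec p q); lra.
  - intros t Ht. apply (deriv_cont_pt f t (df t)). apply Hd.
    unfold Rmin, Rmax in Ht; destruct (Rle_dec p q); lra.
  - unfold Rmin, Rmax in Hc; destruct (Rle_dec p q); [|lra].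
    assert (0 < df c) by (apply Hpos; lra). nra.
Qed.

Lemma const_deriv (f df : R -> R) p q : p <= q ->
  (forall t, p <= t <= q -> is_derive f t (df t)) ->
  (forall t, p <= t <= q -> df t = 0) -> f p = f q.
Proof.
  intros Hpq Hd H0.
  apply Rle_antisym.
  - apply (mono_deriv f df); auto. intros t Ht; rewrite H0; auto; lra.
  - assert (- f p <= - f q); [|lra].
    apply (mono_deriv (fun t => - f t) (fun t => - df t)); auto.
    + intros t Ht. apply (is_derive_opp f t (df t)). auto.
    + intros t Ht. rewrite H0; auto; lra.
Qed.

Lemma is_derive_ext_v (f : R -> R) (x l l' : R) : is_derive f x l -> l = l' -> is_derive f x l'.
Proof. intros H ->; exact H. Qed.

Lemma is_derive_cst (c x : R) : is_derive (fun _ : R => c) x 0.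
Proof. exact (is_derive_const c x). Qed.

Lemma is_derive_extR (f g : R -> R) (x l : R) :
  (forall t, f t = g t) -> is_derive f x l -> is_derive g x l.
Proof. intros H. apply is_derive_ext. exact H. Qed.

Lemma is_derive_neg_id (t : R) : is_derive (fun t : R => - t) t (-1).
Proof.
  eapply is_derive_ext_v. apply (is_derive_opp (fun t : R => t)). apply (is_derive_id t).
  unfold opp, one; simpl. ring.
Qed.

Lemma cont_pos (f : R -> R) x : continuity_pt f x -> 0 < f x ->
  exists eta, 0 < eta /\ forall y, Rabs (y - x) < eta -> 0 < f y.
Proof.
  intros Hc Hp. destruct (Hc (f x) Hp) as [al [Hal H]].
  exists al; split; auto. intros y Hy.
  destruct (Req_dec y x) as [->|Hne]; auto.
  assert (Hd : dist R_met (f y) (f x) < f x).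
  { apply H. split. split; [exact I| auto]. simpl. unfold Rdist. exact Hy. }
  simpl in Hd. unfold Rdist in *.
  apply Rabs_def2 in Hd. lra.
Qed.

Lemma cont_neg (f : R -> R) x : continuity_pt f x -> f x < 0 ->
  exists eta, 0 < eta /\ forall y, Rabs (y - x) < eta -> f y < 0.
Proof.
  intros Hc Hp.
  destruct (cont_pos (fun t => - f t) x) as [e [He H]].
  - apply continuity_pt_opp; auto.
  - lra.
  - exists e; split; auto. intros y Hy; specialize (H y Hy); lra.
Qed.

Section EnvD.
Variables (G H G1 H1 G2 H2 : R -> R) (L R2 : R).
Hypothesis HL : 0 < L.
Hypothesis HR2 : 0 < R2.
Hypothesis dG : forall t, is_derive G t (G1 t).
Hypothesis dH : forall t, is_derive H t (H1 t).
Hypothesis dG1 : forall t, is_derive G1 t (G2 t).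
Hypothesis dH1 : forall t, is_derive H1 t (H2 t).
Hypothesis G0 : G 0 = 0.
Hypothesis H0 : H 0 = 0.
Hypothesis H10 : H1 0 = 0.
Hypothesis G10 : 0 < G1 0.
Hypothesis reg : forall t, 0 <= t <= L -> G1 t <> 0 \/ H1 t <> 0.
Hypothesis kap : forall t, 0 <= t <= L -> 0 < G1 t ->
   G1 t ^ 3 <= R2 * (G1 t * H2 t - H1 t * G2 t).

Let m t := H1 t / G1 t.

Lemma dm t : 0 < G1 t -> is_derive m t ((H2 t * G1 t - H1 t * G2 t) / G1 t ^ 2).
Proof. intros Hp. unfold m. apply is_derive_div; auto; lra. Qed.

Lemma seg_facts t0 : 0 <= t0 <= L -> (forall t, 0 <= t <= t0 -> 0 < G1 t) ->
  0 <= m t0 /\ 0 <= R2 * m t0 - G t0 /\ G t0 ^ 2 <= 2 * R2 * H t0 /\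
  0 <= H t0 - m t0 * G t0 + R2 * (m t0) ^ 2 / 2.
Proof.
  intros Ht0 Hpos.
  assert (Hm' : forall t, 0 <= t <= t0 -> 0 <= (H2 t * G1 t - H1 t * G2 t) / G1 t ^ 2).
  { intros t Ht. assert (P := Hpos t Ht). assert (K := kap t ltac:(lra) P).
    apply Rdiv_le_0_compat; [|apply pow_lt; lra].
    assert (0 < G1 t ^ 3) by (apply pow_lt; lra). nra. }
  assert (Hm : forall t, 0 <= t <= t0 -> 0 <= m t).
  { intros t Ht. assert (m 0 = 0) by (unfold m; rewrite H10; field; lra).
    rewrite <- H3. apply (mono_deriv m (fun t => (H2 t * G1 t - H1 t * G2 t) / G1 t ^ 2)).
    lra. intros s Hs; apply dm; apply Hpos; lra. intros s Hs; apply Hm'; lra. }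
  assert (HE : forall t, 0 <= t <= t0 -> 0 <= R2 * m t - G t).
  { intros t Ht.
    assert (R2 * m 0 - G 0 = 0) by (unfold m; rewrite H10, G0; field; lra).
    rewrite <- H3.
    apply (mono_deriv (fun t => R2 * m t - G t)
       (fun t => R2 * ((H2 t * G1 t - H1 t * G2 t) / G1 t ^ 2) - G1 t)).
    lra.
    - intros s Hs. apply (is_derive_minus (fun t => R2 * m t) G s).
      apply is_derive_scal. apply dm. apply Hpos; lra. apply dG.
    - intros s Hs. assert (P := Hpos s ltac:(lra)). assert (K := kap s ltac:(lra) P).
      assert (R2 * ((H2 s * G1 s - H1 s * G2 s) / G1 s ^ 2) - G1 s
              = (R2 * (G1 s * H2 s - H1 s * G2 s) - G1 s ^ 3) / G1 s ^ 2)
        by (field; lra).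
      rewrite H4. apply Rdiv_le_0_compat; [lra| apply pow_lt; lra]. }
  split; [apply Hm; lra|]. split; [apply HE; lra|]. split.
  - assert (0 <= H t0 - G t0 ^ 2 / (2 * R2)); [|
      apply Rmult_le_reg_r with (/ (2 * R2)); [apply Rinv_0_lt_compat; lra|];
      replace (2 * R2 * H t0 * / (2 * R2)) with (H t0) by (field; lra);
      replace (G t0 ^ 2 * / (2 * R2)) with (G t0 ^ 2 / (2 * R2)) by (field; lra); lra].
    replace 0 with (H 0 - G 0 ^ 2 / (2 * R2)) by (rewrite H0, G0; field; lra).
    apply (mono_deriv (fun t => H t - G t ^ 2 / (2 * R2))
       (fun t => H1 t - G t * G1 t / R2)). lra.
    + intros s Hs. apply is_derive_ext_v with (H1 s - (2 * G1 s * G s) / (2 * R2)).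
      * apply (is_derive_minus H (fun t => G t ^ 2 / (2 * R2)) s).
        apply dH.
        eapply is_derive_ext_v.
        { apply (is_derive_div (fun t => G t ^ 2) (fun _ => 2 * R2) s (INR 2 * G1 s * G s ^ 1) 0).
          - apply (is_derive_pow G 2 s (G1 s)). apply dG.
          - apply is_derive_cst.
          - lra. }
        { simpl. field. lra. }
      * field; lra.
    + intros s Hs. assert (P := Hpos s ltac:(lra)). assert (E := HE s Hs).
      assert (H1 s = m s * G1 s) by (unfold m; field; lra).
      assert (H1 s - G s * G1 s / R2 = G1 s * (R2 * m s - G s) / R2) by (rewrite H3; field; lra).
      rewrite H4. apply Rdiv_le_0_compat; [nra|lra].
  - replace 0 with (H 0 - m 0 * G 0 + R2 * (m 0) ^ 2 / 2)
      by (unfold m; rewrite H0, G0, H10; field; lra).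
    apply (mono_deriv (fun t => H t - m t * G t + R2 * (m t) ^ 2 / 2)
       (fun t => ((H2 t * G1 t - H1 t * G2 t) / G1 t ^ 2) * (R2 * m t - G t))). lra.
    + intros s Hs. assert (P := Hpos s ltac:(lra)).
      set (dm_ := (H2 s * G1 s - H1 s * G2 s) / G1 s ^ 2).
      assert (Dm : is_derive m s dm_) by (apply dm; auto).
      eapply is_derive_ext_v.
      * apply (is_derive_plus (fun t => H t - m t * G t) (fun t => R2 * m t ^ 2 / 2)).
        -- apply (is_derive_minus H (fun t => m t * G t)). apply dH.
           apply (is_derive_mult m G s dm_ (G1 s)); [exact Dm | apply dG | intros; apply Rmult_comm].
        -- apply (is_derive_div (fun t => R2 * m t ^ 2) (fun _ => 2) s (R2 * (INR 2 * dm_ * m s ^ 1)) 0).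
           apply is_derive_scal. apply (is_derive_pow m 2 s dm_). auto.
           apply is_derive_cst. lra.
      * assert (H1 s = m s * G1 s) by (unfold m; field; lra).
        unfold minus, plus, opp, mult; simpl. unfold plus, opp; simpl. unfold dm_ in *. rewrite H3. field. lra.
    + intros s Hs. apply Rmult_le_pos. apply Hm'; lra. apply HE; lra.
Qed.


Hypothesis sup : forall s, 0 < s < L -> G1 s * (H L - H s) - H1 s * (G L - G s) >= 0.
Hypothesis GLpos : 0 < G L.

Lemma envelope : G L ^ 2 <= 2 * R2 * H L.
Proof.
  destruct (classic (forall t, 0 <= t <= L -> 0 < G1 t)) as [Hall|Hnot].
  { apply (seg_facts L); auto; lra. }
  apply not_all_ex_not in Hnot. destruct Hnot as [t0 Ht0].
  apply imply_to_and in Ht0. destruct Ht0 as [Ht0 Hn0]. apply Rnot_lt_le in Hn0.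
  set (S := fun t => 0 <= t <= L /\ forall tau, 0 <= tau <= t -> 0 < G1 tau).
  assert (Hb : bound S). { exists t0. intros t [Ht Hf]. destruct (Rle_dec t t0); auto.
    assert (0 < G1 t0) by (apply Hf; lra). lra. }
  assert (Hex : exists t, S t). { exists 0. split. lra. intros tau Htau.
    replace tau with 0 by lra. auto. }
  destruct (completeness S Hb Hex) as [s1 [Hub Hlub]].
  assert (Hs1t0 : s1 <= t0).
  { apply Hlub. intros t [Ht Hf]. destruct (Rle_dec t t0); auto.
    assert (0 < G1 t0) by (apply Hf; lra). lra. }
  assert (Hs10 : 0 <= s1). { apply Hub. split; [lra|]. intros tau Htau; replace tau with 0 by lra; auto. }
  assert (Hbelow : forall tau, 0 <= tau < s1 -> 0 < G1 tau).
  { intros tau Htau. destruct (classic (exists t, S t /\ tau < t)) as [[t [[Ht Hf] Htt]]|Hno].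
    - apply Hf; lra.
    - exfalso. assert (s1 <= tau); [|lra]. apply Hlub. intros t St.
      destruct (Rle_dec t tau); auto. exfalso; apply Hno; exists t; split; auto; lra. }
  assert (cG1 : forall t, continuity_pt G1 t) by (intros; apply (deriv_cont_pt _ _ (G2 t)); auto).
  assert (cH1 : forall t, continuity_pt H1 t) by (intros; apply (deriv_cont_pt _ _ (H2 t)); auto).
  assert (Hs1pos : 0 < s1).
  { destruct (cont_pos G1 0 (cG1 0) G10) as [e [He Hf]].
    assert (S (Rmin (e/2) t0)).
    { split. unfold Rmin; destruct (Rle_dec (e/2) t0); lra.
      intros tau Htau. apply Hf. unfold Rmin in Htau; destruct (Rle_dec (e/2) t0);
      apply Rabs_def1; lra. }
    assert (0 < Rmin (e/2) t0).
    { unfold Rmin; destruct (Rle_dec (e/2) t0). lra.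
      destruct (Req_dec t0 0). subst. lra. lra. }
    specialize (Hub _ H3). lra. }
  assert (HG1s1 : G1 s1 = 0).
  { destruct (Rtotal_order (G1 s1) 0) as [Hlt|[Heq|Hgt]]; auto; exfalso.
    - destruct (cont_neg G1 s1 (cG1 s1) Hlt) as [e [He Hf]].
      set (tau := Rmax 0 (s1 - e/2)).
      assert (0 < G1 tau). { apply Hbelow. unfold tau, Rmax; destruct (Rle_dec 0 (s1 - e/2)); lra. }
      assert (G1 tau < 0). { apply Hf. unfold tau, Rmax; destruct (Rle_dec 0 (s1 - e/2));
        apply Rabs_def1; lra. }
      lra.
    - destruct (cont_pos G1 s1 (cG1 s1) Hgt) as [e [He Hf]].
      destruct (Req_dec s1 t0) as [Heq|Hne]. subst; lra.
      set (t := Rmin (s1 + e/2) t0).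
      assert (S t).
      { split. unfold t, Rmin; destruct (Rle_dec (s1 + e/2) t0); lra.
        intros tau Htau. destruct (Rlt_le_dec tau s1). apply Hbelow; lra.
        apply Hf. unfold t, Rmin in Htau; destruct (Rle_dec (s1 + e/2) t0); apply Rabs_def1; lra. }
      specialize (Hub _ H3). unfold t, Rmin in Hub; destruct (Rle_dec (s1 + e/2) t0); lra. }
  assert (HH1s1 : 0 < H1 s1).
  { destruct (reg s1 ltac:(lra)) as [Hc|Hc]; [lra|].
    destruct (Rtotal_order (H1 s1) 0) as [Hlt|[Heq|Hgt]]; auto; try lra.
    exfalso. destruct (cont_neg H1 s1 (cH1 s1) Hlt) as [e [He Hf]].
    set (tau := Rmax 0 (s1 - e/2)).
    assert (Htau : 0 <= tau < s1) by (unfold tau, Rmax; destruct (Rle_dec 0 (s1 - e/2)); lra).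
    assert (H1 tau < 0). { apply Hf. unfold tau, Rmax; destruct (Rle_dec 0 (s1 - e/2));
        apply Rabs_def1; lra. }
    destruct (seg_facts tau ltac:(lra)) as [Hm _]. intros; apply Hbelow; lra.
    assert (0 < G1 tau) by (apply Hbelow; auto).
    unfold m in Hm. assert (H1 tau = H1 tau / G1 tau * G1 tau) by (field; lra). nra. }
  destruct (Ranalysis5.IVT_interv (fun t => H1 t - (G L / R2) * G1 t) 0 s1) as [z [Hz Hzv]].
  - intros t Ht. apply continuity_pt_minus. auto. apply continuity_pt_scal. auto.
  - auto.
  - rewrite H10. assert (0 < G L / R2 * G1 0) by (apply Rmult_lt_0_compat; auto;
      apply Rdiv_lt_0_compat; lra). lra.
  - rewrite HG1s1. lra.
  - assert (Hz0 : z <> 0). { intro; subst. rewrite H10 in Hzv.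
      assert (0 < G L / R2 * G1 0) by (apply Rmult_lt_0_compat; auto;
      apply Rdiv_lt_0_compat; lra). lra. }
    assert (Hzs : z <> s1). { intro; subst. rewrite HG1s1 in Hzv. lra. }
    assert (Gz : 0 < G1 z) by (apply Hbelow; lra).
    destruct (seg_facts z ltac:(lra)) as [_ [_ [_ HF]]]. intros; apply Hbelow; lra.
    assert (Hmz : m z = G L / R2) by (unfold m; apply (Rmult_eq_reg_r (G1 z)); [|lra];
      field_simplify; lra).
    specialize (sup z ltac:(lra)).
    assert (H L >= H z + m z * (G L - G z)).
    { unfold m. apply Rle_ge. apply Rmult_le_reg_r with (G1 z). lra.
      replace ((H z + H1 z / G1 z * (G L - G z)) * G1 z) with (H z * G1 z + H1 z * (G L - G z))
        by (field; lra). nra. }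
    rewrite Hmz in HF, H3.
    assert (H L >= G L ^ 2 / (2 * R2)).
    { replace (G L ^ 2 / (2 * R2)) with (G L * (G L / R2) - R2 * (G L / R2) ^ 2 / 2) by (field; lra).
      nra. }
    apply Rge_le in H4.
    apply Rmult_le_reg_r with (/ (2 * R2)). apply Rinv_0_lt_compat; lra.
    replace (2 * R2 * H L * / (2 * R2)) with (H L) by (field; lra).
    unfold Rdiv in H4. lra.
Qed.

End EnvD.

Lemma dist2_coord P Q e : dist2 P Q < e ->
  Rabs (fst P - fst Q) < e /\ Rabs (snd P - snd Q) < e.
Proof.
  destruct P as [p1 p2], Q as [q1 q2]; simpl.
  unfold dist2. simpl. intros H. split.
  - rewrite <- sqrt_Rsqr_abs. eapply Rle_lt_trans; [|exact H].
    apply sqrt_le_1_alt. unfold Rsqr. simpl. pose proof (Rle_0_sqr (p1 - q1)); pose proof (Rle_0_sqr (p2 - q2)); unfold Rsqr in *; lra.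
  - rewrite <- sqrt_Rsqr_abs. eapply Rle_lt_trans; [|exact H].
    apply sqrt_le_1_alt. unfold Rsqr. simpl. pose proof (Rle_0_sqr (p1 - q1)); pose proof (Rle_0_sqr (p2 - q2)); unfold Rsqr in *; lra.
Qed.

Lemma prod_bound u w M z : Rabs u <= M -> Rabs w <= z -> - (M * z) <= u * w <= M * z.
Proof.
  intros Hu Hw. assert (Rabs (u * w) <= M * z).
  { rewrite Rabs_mult. apply Rmult_le_compat; auto; apply Rabs_pos. }
  apply Rabs_le_between in H. lra.
Qed.

Lemma det_pert ax ay bx by' ex ey fx fy M z :
  Rabs ax <= M -> Rabs ay <= M -> Rabs bx <= M -> Rabs by' <= M ->
  Rabs ex <= z -> Rabs ey <= z -> Rabs fx <= z -> Rabs fy <= z ->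
  (ax + ex) * (by' + fy) - (ay + ey) * (bx + fx) <= ax * by' - ay * bx + 4 * M * z + 2 * z * z.
Proof.
  intros. assert (0 <= z) by (eapply Rle_trans; [apply Rabs_pos|eauto]).
  pose proof (prod_bound ax fy M z H H6).
  pose proof (prod_bound ex by' z M H3 H2).
  pose proof (prod_bound ex fy z z H3 H6).
  pose proof (prod_bound ay fx M z H0 H5).
  pose proof (prod_bound ey bx z M H4 H1).
  pose proof (prod_bound ey fx z z H4 H5).
  nra.
Qed.

Definition dt (A B : pt) := fst A * snd B - snd A * fst B.
Definition sub (A B : pt) : pt := (fst A - fst B, snd A - snd B).

Lemma frac01 p q : 0 <= p -> p <= q -> 0 < q -> 0 <= p / q <= 1.
Proof.
  intros. split. apply Rdiv_le_0_compat; lra.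
  apply Rmult_le_reg_r with q; auto. unfold Rdiv. rewrite Rmult_assoc, Rinv_l; lra.
Qed.

Lemma conv_tri (K : pt -> Prop) A1 A2 A3 Z : convex_set K ->
  K A1 -> K A2 -> K A3 ->
  dt (sub A1 Z) (sub A2 Z) < 0 -> dt (sub A2 Z) (sub A3 Z) < 0 -> dt (sub A3 Z) (sub A1 Z) < 0 ->
  K Z.
Proof.
  intros Hc K1 K2 K3 d3 d1 d2.
  destruct A1 as [a1 b1], A2 as [a2 b2], A3 as [a3 b3], Z as [z1 z2].
  unfold dt, sub in *; simpl in *.
  set (l1 := (a2 - z1) * (b3 - z2) - (b2 - z2) * (a3 - z1)) in *.
  set (l2 := (a3 - z1) * (b1 - z2) - (b3 - z2) * (a1 - z1)) in *.
  set (l3 := (a1 - z1) * (b2 - z2) - (b1 - z2) * (a2 - z1)) in *.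
  set (l := (- l3) / (- l2 - l3)).
  assert (Hl : 0 <= l <= 1) by (apply frac01; lra).
  assert (KM := Hc _ _ l K2 K3 Hl). simpl in KM.
  set (l' := (- l2 - l3) / (- l1 - l2 - l3)).
  assert (Hl' : 0 <= l' <= 1) by (apply frac01; lra).
  assert (KZ := Hc _ _ l' K1 KM Hl'). simpl in KZ.
  replace (z1, z2) with ((1 - l') * a1 + l' * ((1 - l) * a2 + l * a3),
                        (1 - l') * b1 + l' * ((1 - l) * b2 + l * b3)); auto.
  unfold l', l, l1, l2, l3. f_equal; field; fold l1 l2 l3; lra.
Qed.

Lemma tri_robust (a1 b1 a2 b2 a3 b3 : R) :
  a1 * b2 - b1 * a2 < 0 -> a2 * b3 - b2 * a3 < 0 -> a3 * b1 - b3 * a1 < 0 ->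
  exists z, 0 < z /\ forall a1' b1' a2' b2' a3' b3' z1 z2,
   Rabs (a1' - a1) < z -> Rabs (b1' - b1) < z -> Rabs (a2' - a2) < z -> Rabs (b2' - b2) < z ->
   Rabs (a3' - a3) < z -> Rabs (b3' - b3) < z -> Rabs z1 < z -> Rabs z2 < z ->
   (a1' - z1) * (b2' - z2) - (b1' - z2) * (a2' - z1) < 0 /\
   (a2' - z1) * (b3' - z2) - (b2' - z2) * (a3' - z1) < 0 /\
   (a3' - z1) * (b1' - z2) - (b3' - z2) * (a1' - z1) < 0.
Proof.
  intros d1 d2 d3.
  set (M := 1 + Rabs a1 + Rabs b1 + Rabs a2 + Rabs b2 + Rabs a3 + Rabs b3).
  assert (HM : 1 <= M) by (unfold M; pose proof (Rabs_pos a1); pose proof (Rabs_pos b1);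
    pose proof (Rabs_pos a2); pose proof (Rabs_pos b2); pose proof (Rabs_pos a3);
    pose proof (Rabs_pos b3); lra).
  assert (Hc : forall c, c = a1 \/ c = b1 \/ c = a2 \/ c = b2 \/ c = a3 \/ c = b3 -> Rabs c <= M).
  { intros c Hc. unfold M; pose proof (Rabs_pos a1); pose proof (Rabs_pos b1);
    pose proof (Rabs_pos a2); pose proof (Rabs_pos b2); pose proof (Rabs_pos a3);
    pose proof (Rabs_pos b3). destruct Hc as [->|[->|[->|[->|[->| ->]]]]]; lra. }
  set (m := Rmin (- (a1 * b2 - b1 * a2)) (Rmin (- (a2 * b3 - b2 * a3)) (- (a3 * b1 - b3 * a1)))).
  assert (Hm : 0 < m) by (unfold m, Rmin; repeat destruct Rle_dec; lra).
  assert (Hm1 : m <= - (a1 * b2 - b1 * a2)) by (unfold m, Rmin; repeat destruct Rle_dec; lra).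
  assert (Hm2 : m <= - (a2 * b3 - b2 * a3)) by (unfold m, Rmin; repeat destruct Rle_dec; lra).
  assert (Hm3 : m <= - (a3 * b1 - b3 * a1)) by (unfold m, Rmin; repeat destruct Rle_dec; lra).
  set (z := Rmin (1/2) (m / (4 * (4 * M + 2)))).
  assert (Hz : 0 < z) by (unfold z, Rmin; destruct Rle_dec; [lra| apply Rdiv_lt_0_compat; lra]).
  assert (Hz1 : z <= 1/2) by (unfold z, Rmin; destruct Rle_dec; lra).
  assert (Hz2 : z <= m / (4 * (4 * M + 2))) by (unfold z, Rmin; destruct Rle_dec; lra).
  assert (Hz3 : (2 * z) * (4 * M + 2) < m).
  { apply Rle_lt_trans with (m / 2). 
    apply Rmult_le_reg_r with (/ (4 * M + 2)). apply Rinv_0_lt_compat; lra.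
    replace (2 * z * (4 * M + 2) * / (4 * M + 2)) with (2 * z) by (field; lra).
    replace (m / 2 * / (4 * M + 2)) with (2 * (m / (4 * (4 * M + 2)))) by (field; lra). lra. lra. }
  exists z. split; auto.
  intros a1' b1' a2' b2' a3' b3' z1 z2 e1 e2 e3 e4 e5 e6 e7 e8.
  assert (Hd : forall u v, Rabs u < z -> Rabs v < z -> Rabs (u - v) <= 2 * z).
  { intros u v Hu Hv. unfold Rminus. eapply Rle_trans. apply Rabs_triang. rewrite Rabs_Ropp. lra. }
  assert (Hzz : 2 * z * (2 * z) <= 2 * z) by nra.
  split; [|split].
  - pose proof (det_pert a1 b1 a2 b2 (a1' - a1 - z1) (b1' - b1 - z2) (a2' - a2 - z1) (b2' - b2 - z2)
      M (2 * z) (Hc a1 ltac:(tauto)) (Hc b1 ltac:(tauto)) (Hc a2 ltac:(tauto)) (Hc b2 ltac:(tauto))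
      (Hd _ _ e1 e7) (Hd _ _ e2 e8) (Hd _ _ e3 e7) (Hd _ _ e4 e8)).
    replace (a1 + (a1' - a1 - z1)) with (a1' - z1) in H by ring.
    replace (b1 + (b1' - b1 - z2)) with (b1' - z2) in H by ring.
    replace (a2 + (a2' - a2 - z1)) with (a2' - z1) in H by ring.
    replace (b2 + (b2' - b2 - z2)) with (b2' - z2) in H by ring. nra.
  - pose proof (det_pert a2 b2 a3 b3 (a2' - a2 - z1) (b2' - b2 - z2) (a3' - a3 - z1) (b3' - b3 - z2)
      M (2 * z) (Hc a2 ltac:(tauto)) (Hc b2 ltac:(tauto)) (Hc a3 ltac:(tauto)) (Hc b3 ltac:(tauto))
      (Hd _ _ e3 e7) (Hd _ _ e4 e8) (Hd _ _ e5 e7) (Hd _ _ e6 e8)).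
    replace (a2 + (a2' - a2 - z1)) with (a2' - z1) in H by ring.
    replace (b2 + (b2' - b2 - z2)) with (b2' - z2) in H by ring.
    replace (a3 + (a3' - a3 - z1)) with (a3' - z1) in H by ring.
    replace (b3 + (b3' - b3 - z2)) with (b3' - z2) in H by ring. nra.
  - pose proof (det_pert a3 b3 a1 b1 (a3' - a3 - z1) (b3' - b3 - z2) (a1' - a1 - z1) (b1' - b1 - z2)
      M (2 * z) (Hc a3 ltac:(tauto)) (Hc b3 ltac:(tauto)) (Hc a1 ltac:(tauto)) (Hc b1 ltac:(tauto))
      (Hd _ _ e5 e7) (Hd _ _ e6 e8) (Hd _ _ e1 e7) (Hd _ _ e2 e8)).
    replace (a3 + (a3' - a3 - z1)) with (a3' - z1) in H by ring.
    replace (b3 + (b3' - b3 - z2)) with (b3' - z2) in H by ring.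
    replace (a1 + (a1' - a1 - z1)) with (a1' - z1) in H by ring.
    replace (b1 + (b1' - b1 - z2)) with (b1' - z2) in H by ring. nra.
Qed.

Lemma neg_of_mul t X : 0 < t -> t * X < 0 -> X < 0.
Proof. intros. nra. Qed.

Lemma Rabs_lt_inv u v : Rabs u < v -> - v < u < v.
Proof. intros H; apply Rabs_def2 in H; lra. Qed.

Lemma sup_core (K : pt -> Prop) (x y : R -> R) (tx ty s : R) :
  convex_set K ->
  derivable_pt_lim x s tx -> derivable_pt_lim y s ty -> 0 < tx ^ 2 + ty ^ 2 ->
  (exists eta, 0 < eta /\ forall t, Rabs (t - s) < eta -> boundary K (x t, y t)) ->
  (exists eta, 0 < eta /\ forall e, e <> 0 -> Rabs e < eta ->
      0 < tx * (y (s + e) - y s) - ty * (x (s + e) - x s)) ->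
  forall P, boundary K P -> 0 <= tx * (snd P - y s) - ty * (fst P - x s).
Proof.
  intros Hc Dx Dy Ht [e1 [He1 Hb]] [e2 [He2 Hl]] P HP.
  destruct (Rle_lt_dec 0 (tx * (snd P - y s) - ty * (fst P - x s))) as [ok|Hneg]; auto.
  exfalso.
  set (bP := tx * (snd P - y s) - ty * (fst P - x s)) in *.
  set (aP := tx * (fst P - x s) + ty * (snd P - y s)).
  set (t2 := tx ^ 2 + ty ^ 2) in *.
  set (Mt := Rabs tx + Rabs ty).
  assert (HMt : 0 < Mt).
  { unfold Mt. pose proof (Rabs_pos tx); pose proof (Rabs_pos ty).
    destruct (Req_dec tx 0). subst tx. assert (ty <> 0) by (intro; subst; unfold t2 in Ht; simpl in Ht; lra).
    pose proof (Rabs_pos_lt ty H1). lra. pose proof (Rabs_pos_lt tx H1). lra. }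
  set (r0 := Rmin (t2 / (2 * Mt)) (t2 * Rabs bP / (4 * Mt * (Rabs aP + 1)))).
  assert (HbP : 0 < Rabs bP) by (apply Rabs_pos_lt; lra).
  assert (HaP := Rabs_pos aP).
  assert (Hr0 : 0 < r0).
  { unfold r0, Rmin; destruct Rle_dec; apply Rdiv_lt_0_compat; try nra. }
  assert (Hr1 : Mt * r0 <= t2 / 2).
  { assert (r0 <= t2 / (2 * Mt)) by (unfold r0, Rmin; destruct Rle_dec; lra).
    apply Rmult_le_compat_l with (r := Mt) in H; [|lra].
    replace (Mt * (t2 / (2 * Mt))) with (t2 / 2) in H by (field; lra). lra. }
  assert (Hr2 : Mt * r0 * (Rabs aP + 1) < t2 * Rabs bP / 2).
  { assert (r0 <= t2 * Rabs bP / (4 * Mt * (Rabs aP + 1))) by (unfold r0, Rmin; destruct Rle_dec; lra).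
    apply Rmult_le_compat_l with (r := Mt * (Rabs aP + 1)) in H; [|nra].
    replace (Mt * (Rabs aP + 1) * (t2 * Rabs bP / (4 * Mt * (Rabs aP + 1)))) with
      (t2 * Rabs bP / 4) in H by (field; lra).
    assert (0 < t2 * Rabs bP) by (apply Rmult_lt_0_compat; lra). lra. }
  destruct (Dx r0 Hr0) as [dx Hdx]. destruct (Dy r0 Hr0) as [dy Hdy].
  set (eps := Rmin (Rmin dx dy) (Rmin e1 e2) / 2).
  assert (Heps : 0 < eps).
  { unfold eps. apply Rdiv_lt_0_compat; [|lra]. pose proof (cond_pos dx); pose proof (cond_pos dy).
    unfold Rmin; repeat destruct Rle_dec; lra. }
  assert (Hedx : eps < dx) by (pose proof (cond_pos dx); pose proof (cond_pos dy);
     unfold eps, Rmin; repeat destruct Rle_dec; lra).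
  assert (Hedy : eps < dy) by (pose proof (cond_pos dx); pose proof (cond_pos dy);
     unfold eps, Rmin; repeat destruct Rle_dec; lra).
  assert (Hee1 : eps < e1) by (pose proof (cond_pos dx); pose proof (cond_pos dy);
     unfold eps, Rmin; repeat destruct Rle_dec; lra).
  assert (Hee2 : eps < e2) by (pose proof (cond_pos dx); pose proof (cond_pos dy);
     unfold eps, Rmin; repeat destruct Rle_dec; lra).
  assert (Ap : Rabs eps < dx) by (rewrite Rabs_pos_eq; lra).
  assert (Am : Rabs (- eps) < dx) by (rewrite Rabs_Ropp, Rabs_pos_eq; lra).
  assert (Bp : Rabs eps < dy) by (rewrite Rabs_pos_eq; lra).
  assert (Bm : Rabs (- eps) < dy) by (rewrite Rabs_Ropp, Rabs_pos_eq; lra).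
  pose proof (Hdx eps ltac:(lra) Ap) as X1. pose proof (Hdx (- eps) ltac:(lra) Am) as X3.
  pose proof (Hdy eps ltac:(lra) Bp) as X2. pose proof (Hdy (- eps) ltac:(lra) Bm) as X4.
  set (r1 := (x (s + eps) - x s) / eps - tx) in *.
  set (r2 := (y (s + eps) - y s) / eps - ty) in *.
  set (r3 := (x (s + - eps) - x s) / - eps - tx) in *.
  set (r4 := (y (s + - eps) - y s) / - eps - ty) in *.
  assert (Lpx : x (s + eps) - x s = eps * (tx + r1)) by (unfold r1; field; lra).
  assert (Lpy : y (s + eps) - y s = eps * (ty + r2)) by (unfold r2; field; lra).
  assert (Lmx : x (s + - eps) - x s = - eps * (tx + r3)) by (unfold r3; field; lra).
  assert (Lmy : y (s + - eps) - y s = - eps * (ty + r4)) by (unfold r4; field; lra).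
  pose proof (Hl eps ltac:(lra) ltac:(rewrite Rabs_pos_eq; lra)) as Bplus.
  pose proof (Hl (- eps) ltac:(lra) ltac:(rewrite Rabs_Ropp, Rabs_pos_eq; lra)) as Bminus.
  assert (Hq : forall u v, Rabs u < r0 -> Rabs v < r0 -> Rabs (tx * u + ty * v) <= Mt * r0
                  /\ Rabs (tx * v - ty * u) <= Mt * r0).
  { intros u v Hu Hv. unfold Mt. split.
    - eapply Rle_trans. apply Rabs_triang. rewrite !Rabs_mult.
      pose proof (Rabs_pos tx); pose proof (Rabs_pos ty); nra.
    - unfold Rminus. eapply Rle_trans. apply Rabs_triang. rewrite Rabs_Ropp, !Rabs_mult.
      pose proof (Rabs_pos tx); pose proof (Rabs_pos ty); nra. }
  destruct (Hq r1 r2 X1 X2) as [Q1 Q2]. destruct (Hq r3 r4 X3 X4) as [Q3 Q4].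
  apply Rabs_le_between in Q1. apply Rabs_le_between in Q2.
  apply Rabs_le_between in Q3. apply Rabs_le_between in Q4.
  set (a1 := x (s + - eps) - x s). set (b1 := y (s + - eps) - y s).
  set (a2 := x (s + eps) - x s). set (b2 := y (s + eps) - y s).
  set (a3 := fst P - x s). set (b3 := snd P - y s).
  assert (Hid : forall ax ay bx by', t2 * (ax * by' - ay * bx) =
     (tx * ax + ty * ay) * (tx * by' - ty * bx) - (tx * ay - ty * ax) * (tx * bx + ty * by')).
  { intros. unfold t2. ring. }
  assert (alp : tx * a2 + ty * b2 >= eps * t2 / 2).
  { unfold a2, b2. rewrite Lpx, Lpy.
    replace (tx * (eps * (tx + r1)) + ty * (eps * (ty + r2))) with (eps * (t2 + (tx * r1 + ty * r2)))
      by (unfold t2; ring). nra. }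
  assert (alm : tx * a1 + ty * b1 <= - eps * t2 / 2).
  { unfold a1, b1. rewrite Lmx, Lmy.
    replace (tx * (- eps * (tx + r3)) + ty * (- eps * (ty + r4))) with (- eps * (t2 + (tx * r3 + ty * r4)))
      by (unfold t2; ring). nra. }
  assert (bep : 0 < tx * b2 - ty * a2 <= eps * (Mt * r0)).
  { unfold a2, b2. split. lra. rewrite Lpx, Lpy.
    replace (tx * (eps * (ty + r2)) - ty * (eps * (tx + r1))) with (eps * (tx * r2 - ty * r1)) by ring.
    nra. }
  assert (bem : 0 < tx * b1 - ty * a1 <= eps * (Mt * r0)).
  { unfold a1, b1. split. lra. rewrite Lmx, Lmy.
    replace (tx * (- eps * (ty + r4)) - ty * (- eps * (tx + r3))) with (- eps * (tx * r4 - ty * r3)) by ring.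
    nra. }
  assert (HaPb : - Rabs aP <= aP <= Rabs aP) by (apply Rabs_le_between; lra).
  assert (bPa : bP = - Rabs bP) by (rewrite Rabs_left; lra).
  assert (d1 : a1 * b2 - b1 * a2 < 0).
  { apply (neg_of_mul t2); [lra|]. rewrite Hid.
    assert (0 < tx * a2 + ty * b2) by nra. assert (tx * a1 + ty * b1 < 0) by nra.
    pose proof (Rmult_lt_0_compat _ _ H (proj1 bem)).
    pose proof (Rmult_lt_0_compat _ _ (proj1 bep) (Ropp_0_gt_lt_contravar _ H0)). nra. }
  assert (d2 : a2 * b3 - b2 * a3 < 0).
  { apply (neg_of_mul t2); [lra|]. rewrite Hid.
    fold aP. replace (tx * b3 - ty * a3) with bP by (unfold bP, a3, b3; ring).
    replace (tx * a3 + ty * b3) with aP by (unfold aP, a3, b3; ring).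
    assert ((tx * a2 + ty * b2) * bP <= eps * t2 / 2 * bP) by nra.
    assert ((tx * b2 - ty * a2) * aP >= - (eps * (Mt * r0)) * Rabs aP) by nra.
    assert (eps * (Mt * r0) * Rabs aP < eps * (t2 * Rabs bP / 2)) by nra.
    nra. }
  assert (d3 : a3 * b1 - b3 * a1 < 0).
  { apply (neg_of_mul t2); [lra|]. rewrite Hid.
    replace (tx * b3 - ty * a3) with bP by (unfold bP, a3, b3; ring).
    replace (tx * a3 + ty * b3) with aP by (unfold aP, a3, b3; ring).
    assert (bP * (tx * a1 + ty * b1) >= - eps * t2 / 2 * bP) by nra.
    assert (aP * (tx * b1 - ty * a1) <= (eps * (Mt * r0)) * Rabs aP) by nra.
    assert (eps * (Mt * r0) * Rabs aP < eps * (t2 * Rabs bP / 2)) by nra.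
    nra. }
  destruct (tri_robust a1 b1 a2 b2 a3 b3 d1 d2 d3) as [z [Hz Hrob]].
  destruct (Hb (s + - eps) ltac:(replace (s + - eps - s) with (- eps) by ring;
      rewrite Rabs_Ropp, Rabs_pos_eq; lra) z Hz) as [[K1 [HK1 DK1]] _].
  destruct (Hb (s + eps) ltac:(replace (s + eps - s) with eps by ring;
      rewrite Rabs_pos_eq; lra) z Hz) as [[K2 [HK2 DK2]] _].
  destruct (HP z Hz) as [[K3 [HK3 DK3]] _].
  destruct (Hb s ltac:(replace (s - s) with 0 by ring; rewrite Rabs_R0; lra) z Hz) as [_ [Q [HQ DQ]]].
  apply dist2_coord in DK1, DK2, DK3, DQ. simpl in DK1, DK2, DQ.
  destruct DK1 as [k1x k1y], DK2 as [k2x k2y], DK3 as [k3x k3y], DQ as [qx qy].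
  rewrite <- Rabs_Ropp in k1x, k1y, k2x, k2y, k3x, k3y.
  destruct (Hrob (fst K1 - x s) (snd K1 - y s) (fst K2 - x s) (snd K2 - y s)
     (fst K3 - x s) (snd K3 - y s) (fst Q - x s) (snd Q - y s)) as [E1 [E2 E3]].
  - unfold a1. replace (fst K1 - x s - (x (s + - eps) - x s)) with (- (x (s + - eps) - fst K1)) by ring. auto.
  - unfold b1. replace (snd K1 - y s - (y (s + - eps) - y s)) with (- (y (s + - eps) - snd K1)) by ring. auto.
  - unfold a2. replace (fst K2 - x s - (x (s + eps) - x s)) with (- (x (s + eps) - fst K2)) by ring. auto.
  - unfold b2. replace (snd K2 - y s - (y (s + eps) - y s)) with (- (y (s + eps) - snd K2)) by ring. auto.
  - unfold a3. replace (fst K3 - x s - (fst P - x s)) with (- (fst P - fst K3)) by ring. auto.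
  - unfold b3. replace (snd K3 - y s - (snd P - y s)) with (- (snd P - snd K3)) by ring. auto.
  - rewrite <- Rabs_Ropp. replace (- (fst Q - x s)) with (x s - fst Q) by ring. auto.
  - rewrite <- Rabs_Ropp. replace (- (snd Q - y s)) with (y s - snd Q) by ring. auto.
  - apply HQ. apply (conv_tri K K1 K2 K3 Q Hc HK1 HK2 HK3); unfold dt, sub; simpl.
    + replace (fst K1 - fst Q) with (fst K1 - x s - (fst Q - x s)) by ring.
      replace (snd K1 - snd Q) with (snd K1 - y s - (snd Q - y s)) by ring.
      replace (fst K2 - fst Q) with (fst K2 - x s - (fst Q - x s)) by ring.
      replace (snd K2 - snd Q) with (snd K2 - y s - (snd Q - y s)) by ring. exact E1.
    + replace (fst K3 - fst Q) with (fst K3 - x s - (fst Q - x s)) by ring.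
      replace (snd K3 - snd Q) with (snd K3 - y s - (snd Q - y s)) by ring.
      replace (fst K2 - fst Q) with (fst K2 - x s - (fst Q - x s)) by ring.
      replace (snd K2 - snd Q) with (snd K2 - y s - (snd Q - y s)) by ring. exact E2.
    + replace (fst K1 - fst Q) with (fst K1 - x s - (fst Q - x s)) by ring.
      replace (snd K1 - snd Q) with (snd K1 - y s - (snd Q - y s)) by ring.
      replace (fst K3 - fst Q) with (fst K3 - x s - (fst Q - x s)) by ring.
      replace (snd K3 - snd Q) with (snd K3 - y s - (snd Q - y s)) by ring. exact E3.
Qed.

Lemma shift_lin_derive (f g df dg : R -> R) (c d p k1 k2 sg : R) :
  (forall t, is_derive f t (df t)) -> (forall t, is_derive g t (dg t)) ->
  forall t, is_derive (fun t => c * (f (p + sg * t) - k1) + d * (g (p + sg * t) - k2)) t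
     (sg * (c * df (p + sg * t) + d * dg (p + sg * t))).
Proof.
  intros Hf Hg t.
  assert (Hin : is_derive (fun t : R => p + sg * t) t sg).
  { eapply is_derive_ext_v. apply (is_derive_plus (fun _ => p) (fun t => sg * t)).
    apply is_derive_cst. eapply is_derive_ext_v. apply is_derive_scal. apply (is_derive_id t).
    simpl. reflexivity. unfold plus, one; simpl. ring. }
  eapply is_derive_ext_v.
  apply (is_derive_plus (fun t => c * (f (p + sg * t) - k1)) (fun t => d * (g (p + sg * t) - k2))).
  - apply is_derive_scal. apply (is_derive_minus (fun t => f (p + sg * t)) (fun _ => k1)).
    apply (is_derive_comp f (fun t => p + sg * t)). apply Hf. apply Hin. apply is_derive_cst.
  - apply is_derive_scal. apply (is_derive_minus (fun t => g (p + sg * t)) (fun _ => k2)).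
    apply (is_derive_comp g (fun t => p + sg * t)). apply Hg. apply Hin. apply is_derive_cst.
  - unfold plus, minus, opp, scal, zero; simpl. unfold mult, plus, opp; simpl. ring.
Qed.

Section Frame.
Variables x y x1 y1 x2 y2 : R -> R.
Variable R2 : R.
Hypothesis C2 : forall t, is_derive x t (x1 t) /\ is_derive y t (y1 t) /\
   is_derive x1 t (x2 t) /\ is_derive y1 t (y2 t).

Let sp t := sqrt (x1 t ^ 2 + y1 t ^ 2).

Lemma unit_t p : 0 < x1 p ^ 2 + y1 p ^ 2 ->
  (x1 p / sp p) ^ 2 + (y1 p / sp p) ^ 2 = 1 /\ 0 < sp p.
Proof.
  intros H. assert (Hs : 0 < sp p) by (apply sqrt_lt_R0; auto).
  split; auto. assert (sp p ^ 2 = x1 p ^ 2 + y1 p ^ 2).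
  { unfold sp. apply pow2_sqrt. lra. }
  field_simplify; [|lra]. rewrite H0. field. lra.
Qed.

Lemma cs_bound tx ty u v : tx ^ 2 + ty ^ 2 = 1 ->
  tx * u + ty * v <= sqrt (u ^ 2 + v ^ 2).
Proof.
  intros H. destruct (Rle_lt_dec (tx * u + ty * v) 0). 
  - pose proof (sqrt_pos (u ^ 2 + v ^ 2)); lra.
  - rewrite <- (sqrt_pow2 (tx * u + ty * v)) by lra. apply sqrt_le_1_alt.
    assert ((tx * u + ty * v) ^ 2 + (tx * v - ty * u) ^ 2 = (tx^2+ty^2) * (u^2+v^2)) by ring.
    rewrite H in H0. pose proof (pow2_ge_0 (tx * v - ty * u)). lra.
Qed.

Lemma frame_gen p L sg tx ty (Qx Qy : R) :
  0 < L -> 0 < R2 -> (sg = 1 \/ sg = -1) -> tx ^ 2 + ty ^ 2 = 1 ->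
  tx * y1 p - ty * x1 p = 0 -> 0 < tx * x1 p + ty * y1 p ->
  (forall t, 0 <= t <= L -> 0 < x1 (p + sg * t) ^ 2 + y1 (p + sg * t) ^ 2) ->
  (forall t, 0 <= t <= L -> sp (p + sg * t) ^ 3 <=
      R2 * (x1 (p + sg * t) * y2 (p + sg * t) - y1 (p + sg * t) * x2 (p + sg * t))) ->
  (forall t, 0 < t < L -> 0 <= x1 (p + sg * t) * (y (p + sg * L) - y (p + sg * t))
                           - y1 (p + sg * t) * (x (p + sg * L) - x (p + sg * t))) ->
  0 < sg * (tx * (x (p + sg * L) - x p) + ty * (y (p + sg * L) - y p)) ->
  (tx * (x (p + sg * L) - x p) + ty * (y (p + sg * L) - y p)) ^ 2 <=
    2 * R2 * (tx * (y (p + sg * L) - y p) - ty * (x (p + sg * L) - x p)).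
Proof.
  intros HL HR Hsg Hu Hn Ht Hreg Hkap Hsup Hpos.
  assert (sg2 : sg * sg = 1) by (destruct Hsg; subst; ring).
  set (G := fun t => sg * (tx * (x (p + sg * t) - x p) + ty * (y (p + sg * t) - y p))).
  set (H := fun t => tx * (y (p + sg * t) - y p) - ty * (x (p + sg * t) - x p)).
  set (G1 := fun t => tx * x1 (p + sg * t) + ty * y1 (p + sg * t)).
  set (H1 := fun t => sg * (tx * y1 (p + sg * t) - ty * x1 (p + sg * t))).
  set (G2 := fun t => sg * (tx * x2 (p + sg * t) + ty * y2 (p + sg * t))).
  set (H2 := fun t => tx * y2 (p + sg * t) - ty * x2 (p + sg * t)).
  assert (dx : forall t, is_derive x t (x1 t)) by (intro t; apply C2).
  assert (dy : forall t, is_derive y t (y1 t)) by (intro t; apply C2).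
  assert (dx1 : forall t, is_derive x1 t (x2 t)) by (intro t; apply C2).
  assert (dy1 : forall t, is_derive y1 t (y2 t)) by (intro t; apply C2).
  assert (env := envelope G H G1 H1 G2 H2 L R2 HL HR).
  assert (HGL : G L ^ 2 <= 2 * R2 * H L).
  { apply env.
    - intro t. unfold G, G1. eapply is_derive_ext_v. apply is_derive_scal.
      apply (shift_lin_derive x y x1 y1 tx ty p (x p) (y p) sg dx dy t).
      rewrite <- Rmult_assoc, sg2. ring.
    - intro t. unfold H, H1. eapply is_derive_ext_v.
      apply (is_derive_extR (fun t => tx * (y (p + sg * t) - y p) + - ty * (x (p + sg * t) - x p))).
      intro; ring.
      apply (shift_lin_derive y x y1 x1 tx (- ty) p (y p) (x p) sg dy dx t).
      ring.
    - intro t. unfold G1, G2. eapply is_derive_ext_v.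
      apply (is_derive_extR (fun t => tx * (x1 (p + sg * t) - 0) + ty * (y1 (p + sg * t) - 0))).
      intro; ring.
      apply (shift_lin_derive x1 y1 x2 y2 tx ty p 0 0 sg dx1 dy1 t). ring.
    - intro t. unfold H1, H2. eapply is_derive_ext_v. apply is_derive_scal.
      apply (is_derive_extR (fun t => tx * (y1 (p + sg * t) - 0) + - ty * (x1 (p + sg * t) - 0))).
      intro; ring.
      apply (shift_lin_derive y1 x1 y2 x2 tx (- ty) p 0 0 sg dy1 dx1 t).
      rewrite <- Rmult_assoc, sg2. ring.
    - unfold G. rewrite Rmult_0_r, Rplus_0_r. ring.
    - unfold H. rewrite Rmult_0_r, Rplus_0_r. ring.
    - unfold H1. rewrite Rmult_0_r, Rplus_0_r. rewrite Hn. ring.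
    - unfold G1. rewrite Rmult_0_r, Rplus_0_r. auto.
    - intros t Ht0. unfold G1, H1.
      destruct (Req_dec (tx * x1 (p + sg * t) + ty * y1 (p + sg * t)) 0) as [E|E]; [right|left; auto].
      intro E2. assert (E3 : tx * y1 (p + sg * t) - ty * x1 (p + sg * t) = 0).
      { destruct Hsg; subst sg; lra. }
      specialize (Hreg t Ht0).
      assert ((tx * x1 (p + sg * t) + ty * y1 (p + sg * t)) ^ 2 + (tx * y1 (p + sg * t) - ty * x1 (p + sg * t)) ^ 2
        = (tx ^ 2 + ty ^ 2) * (x1 (p + sg * t) ^ 2 + y1 (p + sg * t) ^ 2)) by ring.
      rewrite E, E3, Hu in H0. lra.
    - intros t Ht0 HG1. unfold G1, H1, G2, H2 in *.
      specialize (Hkap t Ht0).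
      replace ((tx * x1 (p + sg * t) + ty * y1 (p + sg * t)) * (tx * y2 (p + sg * t) - ty * x2 (p + sg * t)) -
         sg * (tx * y1 (p + sg * t) - ty * x1 (p + sg * t)) * (sg * (tx * x2 (p + sg * t) + ty * y2 (p + sg * t))))
       with ((tx ^ 2 + ty ^ 2) * (x1 (p + sg * t) * y2 (p + sg * t) - y1 (p + sg * t) * x2 (p + sg * t)))
       by (replace (sg * (tx * y1 (p + sg * t) - ty * x1 (p + sg * t)) * (sg * (tx * x2 (p + sg * t) + ty * y2 (p + sg * t))))
           with ((sg * sg) * ((tx * y1 (p + sg * t) - ty * x1 (p + sg * t)) * (tx * x2 (p + sg * t) + ty * y2 (p + sg * t)))) by ring;
           rewrite sg2; ring).
      rewrite Hu, Rmult_1_l. eapply Rle_trans; [|exact Hkap].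
      apply pow_incr. split; [lra|]. apply cs_bound; auto.
    - intros s Hs. unfold G, H, G1, H1. specialize (Hsup s Hs).
      replace ((tx * x1 (p + sg * s) + ty * y1 (p + sg * s)) *
        (tx * (y (p + sg * L) - y p) - ty * (x (p + sg * L) - x p) - (tx * (y (p + sg * s) - y p) - ty * (x (p + sg * s) - x p))) -
        sg * (tx * y1 (p + sg * s) - ty * x1 (p + sg * s)) *
        (sg * (tx * (x (p + sg * L) - x p) + ty * (y (p + sg * L) - y p)) -
         sg * (tx * (x (p + sg * s) - x p) + ty * (y (p + sg * s) - y p))))
      with ((tx ^ 2 + ty ^ 2) * (x1 (p + sg * s) * (y (p + sg * L) - y (p + sg * s)) - y1 (p + sg * s) * (x (p + sg * L) - x (p + sg * s))))
      by (replace (sg * (tx * y1 (p + sg * s) - ty * x1 (p + sg * s)) *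
        (sg * (tx * (x (p + sg * L) - x p) + ty * (y (p + sg * L) - y p)) -
         sg * (tx * (x (p + sg * s) - x p) + ty * (y (p + sg * s) - y p)))) with
         ((sg * sg) * ((tx * y1 (p + sg * s) - ty * x1 (p + sg * s)) *
        ((tx * (x (p + sg * L) - x p) + ty * (y (p + sg * L) - y p)) -
         (tx * (x (p + sg * s) - x p) + ty * (y (p + sg * s) - y p))))) by ring; rewrite sg2; ring).
      rewrite Hu. lra.
    - unfold G. auto. }
  unfold G, H in HGL.
  replace ((sg * (tx * (x (p + sg * L) - x p) + ty * (y (p + sg * L) - y p))) ^ 2) with
    ((sg * sg) * (tx * (x (p + sg * L) - x p) + ty * (y (p + sg * L) - y p)) ^ 2) in HGL by ring.
  rewrite sg2, Rmult_1_l in HGL. exact HGL.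
Qed.

End Frame.

Lemma sq_pos u : u <> 0 -> 0 < u ^ 2.
Proof. intros H. pose proof (Rsqr_pos_lt u H). unfold Rsqr in H0. simpl. lra. Qed.

Lemma curv_facts x1 y1 x2 y2 a b R1 R2 :
  regular_on x1 y1 x2 y2 a b ->
  (forall t, a <= t <= b -> 0 < curvature x1 y1 x2 y2 t) ->
  (forall t, a <= t <= b -> R1 <= 1 / curvature x1 y1 x2 y2 t <= R2) ->
  forall t, a <= t <= b -> 0 < x1 t ^ 2 + y1 t ^ 2 /\
    sqrt (x1 t ^ 2 + y1 t ^ 2) ^ 3 <= R2 * (x1 t * y2 t - y1 t * x2 t) /\
    0 < x1 t * y2 t - y1 t * x2 t.
Proof.
  intros Hreg Hk Hr t Ht.
  assert (H0 : 0 < x1 t ^ 2 + y1 t ^ 2).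
  { destruct (Hreg t Ht) as [Hn _].
    pose proof (pow2_ge_0 (x1 t)). pose proof (pow2_ge_0 (y1 t)).
    destruct (Req_dec (x1 t) 0) as [E1|E1].
    - destruct (Req_dec (y1 t) 0) as [E2|E2].
      + exfalso. apply Hn. rewrite E1, E2. auto.
      + pose proof (sq_pos _ E2). lra.
    - pose proof (sq_pos _ E1). lra. }
  assert (Hs : 0 < sqrt (x1 t ^ 2 + y1 t ^ 2)) by (apply sqrt_lt_R0; auto).
  assert (Hs3 : 0 < sqrt (x1 t ^ 2 + y1 t ^ 2) ^ 3) by (apply pow_lt; auto).
  specialize (Hk t Ht). specialize (Hr t Ht).
  unfold curvature, speed in *.
  set (sp := sqrt (x1 t ^ 2 + y1 t ^ 2)) in *.
  set (d := x1 t * y2 t - y1 t * x2 t) in *.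
  assert (Hd : 0 < d).
  { unfold Rdiv in Hk. destruct (Rle_lt_dec d 0); auto.
    assert (0 < / sp ^ 3) by (apply Rinv_0_lt_compat; auto). nra. }
  split; auto. split; auto.
  destruct Hr as [_ Hr].
  replace (1 / (d / sp ^ 3)) with (sp ^ 3 / d) in Hr by (field; lra).
  apply Rmult_le_reg_r with (/ d). apply Rinv_0_lt_compat; auto.
  replace (R2 * d * / d) with R2 by (field; lra). exact Hr.
Qed.

Lemma strict_left x y x1 y1 x2 y2 s :
  (forall t, is_derive x t (x1 t) /\ is_derive y t (y1 t) /\
   is_derive x1 t (x2 t) /\ is_derive y1 t (y2 t)) ->
  0 < x1 s * y2 s - y1 s * x2 s ->
  exists eta, 0 < eta /\ forall e, e <> 0 -> Rabs e < eta ->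
      0 < x1 s * (y (s + e) - y s) - y1 s * (x (s + e) - x s).
Proof.
  intros C2 Hd.
  set (g := fun h => x1 s * (y1 (s + h) - y1 s) + - y1 s * (x1 (s + h) - x1 s)).
  set (f := fun h => x1 s * (y (s + h) - y s) + - y1 s * (x (s + h) - x s)).
  assert (dg : forall h, is_derive g h (1 * (x1 s * y2 (s + 1 * h) + - y1 s * x2 (s + 1 * h)))).
  { intro h. unfold g. apply (is_derive_extR (fun h => x1 s * (y1 (s + 1 * h) - y1 s) + - y1 s * (x1 (s + 1 * h) - x1 s))).
    intro; rewrite Rmult_1_l; auto.
    apply (shift_lin_derive y1 x1 y2 x2 (x1 s) (- y1 s) s (y1 s) (x1 s) 1); intro; apply C2. }
  assert (df : forall h, is_derive f h (1 * (x1 s * y1 (s + 1 * h) + - y1 s * x1 (s + 1 * h)))).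
  { intro h. unfold f. apply (is_derive_extR (fun h => x1 s * (y (s + 1 * h) - y s) + - y1 s * (x (s + 1 * h) - x s))).
    intro; rewrite Rmult_1_l; auto.
    apply (shift_lin_derive y x y1 x1 (x1 s) (- y1 s) s (y s) (x s) 1); intro; apply C2. }
  assert (df' : forall h, is_derive f h (g h)).
  { intro h. eapply is_derive_ext_v. apply df. unfold g. rewrite !Rmult_1_l. ring. }
  pose proof (dg 0) as dg0. rewrite !Rmult_1_l, Rplus_0_r in dg0.
  apply is_derive_Reals in dg0.
  destruct (dg0 ((x1 s * y2 s + - y1 s * x2 s) / 2)) as [del Hdel]. lra.
  assert (g0 : g 0 = 0) by (unfold g; rewrite Rplus_0_r; ring).
  assert (gsign : forall h, h <> 0 -> Rabs h < del -> 0 < g h / h).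
  { intros h Hh Hh2. specialize (Hdel h Hh Hh2). rewrite Rplus_0_l, g0, Rminus_0_r in Hdel.
    apply Rabs_def2 in Hdel. lra. }
  assert (gpos : forall h, 0 < h < del -> 0 < g h).
  { intros h Hh. specialize (gsign h ltac:(lra) ltac:(rewrite Rabs_pos_eq; lra)).
    apply Rdiv_pos_cases in gsign. lra. }
  assert (gneg : forall h, - del < h < 0 -> g h < 0).
  { intros h Hh. specialize (gsign h ltac:(lra) ltac:(rewrite Rabs_left; lra)).
    apply Rdiv_pos_cases in gsign. lra. }
  assert (f0 : f 0 = 0) by (unfold f; rewrite Rplus_0_r; ring).
  exists del. split. apply cond_pos.
  intros e He He2.
  assert (f e = x1 s * (y (s + e) - y s) - y1 s * (x (s + e) - x s)) by (unfold f; ring).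
  rewrite <- H.
  destruct (Rlt_or_le 0 e) as [Hp|Hn].
  - rewrite Rabs_pos_eq in He2 by lra.
    assert (f 0 <= f (e / 2)).
    { apply (mono_deriv f g). lra. intros; apply df'.
      intros t Ht. destruct (Req_dec t 0). subst; lra. apply Rlt_le, gpos; lra. }
    assert (f (e / 2) < f e).
    { apply (smono_deriv f g). lra. intros; apply df'. intros t Ht. apply gpos; lra. }
    lra.
  - assert (e < 0) by lra. rewrite Rabs_left in He2 by lra.
    assert (f (- - 0) <= f (- - (e / 2))).
    { apply (mono_deriv (fun t => f (- t)) (fun t => - g (- t)) (- 0) (- (e / 2))). lra.
      intros t _. eapply is_derive_ext_v.
      apply (is_derive_comp f (fun t => - t)). apply df'. apply is_derive_neg_id.
      unfold scal; simpl. unfold mult; simpl. ring.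
      intros t Ht. destruct (Req_dec t 0). subst. rewrite Ropp_0, g0; lra.
      apply Rlt_le. assert (g (- t) < 0) by (apply gneg; lra). lra. }
    assert (f (- - (e / 2)) < f (- - e)).
    { apply (smono_deriv (fun t => f (- t)) (fun t => - g (- t)) (- (e / 2)) (- e)). lra.
      intros t _. eapply is_derive_ext_v.
      apply (is_derive_comp f (fun t => - t)). apply df'. apply is_derive_neg_id.
      unfold scal; simpl. unfold mult; simpl. ring.
      intros t Ht. assert (g (- t) < 0) by (apply gneg; lra). lra. }
    rewrite !Ropp_involutive in *. lra.
Qed.

Definition C2d (x y x1 y1 x2 y2 : R -> R) := forall t, is_derive x t (x1 t) /\ is_derive y t (y1 t) /\
   is_derive x1 t (x2 t) /\ is_derive y1 t (y2 t).

Definition goodpt (x1 y1 x2 y2 : R -> R) R2 t :=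
  0 < x1 t ^ 2 + y1 t ^ 2 /\
  sqrt (x1 t ^ 2 + y1 t ^ 2) ^ 3 <= R2 * (x1 t * y2 t - y1 t * x2 t).

Definition tX (x1 y1 : R -> R) p := x1 p / sqrt (x1 p ^ 2 + y1 p ^ 2).
Definition tY (x1 y1 : R -> R) p := y1 p / sqrt (x1 p ^ 2 + y1 p ^ 2).

Lemma frame_unit x1 y1 p : 0 < x1 p ^ 2 + y1 p ^ 2 ->
  tX x1 y1 p ^ 2 + tY x1 y1 p ^ 2 = 1 /\ tX x1 y1 p * y1 p - tY x1 y1 p * x1 p = 0 /\
  0 < tX x1 y1 p * x1 p + tY x1 y1 p * y1 p.
Proof.
  intros H. destruct (unit_t x1 y1 p H) as [U S]. unfold tX, tY.
  split; [exact U|]. split. field. apply Rgt_not_eq. exact S.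
  set (sp := sqrt (x1 p ^ 2 + y1 p ^ 2)) in *.
  replace (x1 p / sp * x1 p + y1 p / sp * y1 p) with ((x1 p ^ 2 + y1 p ^ 2) / sp) by (field; lra).
  apply Rdiv_lt_0_compat; auto.
Qed.

Lemma para_fwd x y x1 y1 x2 y2 R2 p q :
  C2d x y x1 y1 x2 y2 -> 0 < R2 -> p < q ->
  (forall t, p <= t <= q -> goodpt x1 y1 x2 y2 R2 t) ->
  (forall s, p < s < q -> 0 <= x1 s * (y q - y s) - y1 s * (x q - x s)) ->
  0 < tX x1 y1 p * (x q - x p) + tY x1 y1 p * (y q - y p) ->
  (tX x1 y1 p * (x q - x p) + tY x1 y1 p * (y q - y p)) ^ 2 <=
    2 * R2 * (tX x1 y1 p * (y q - y p) - tY x1 y1 p * (x q - x p)).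
Proof.
  intros C2 HR Hpq Hg Hs Hpos.
  destruct (frame_unit x1 y1 p (proj1 (Hg p ltac:(lra)))) as [U [N T]].
  assert (E := frame_gen x y x1 y1 x2 y2 R2 C2 p (q - p) 1 (tX x1 y1 p) (tY x1 y1 p) 0 0
     ltac:(lra) HR (or_introl eq_refl) U N T).
  replace (p + 1 * (q - p)) with q in E by ring.
  apply E.
  - intros t Ht. apply (Hg (p + 1 * t)). lra.
  - intros t Ht. apply (Hg (p + 1 * t)). lra.
  - intros t Ht. apply (Hs (p + 1 * t)). lra.
  - lra.
Qed.

Lemma para_bwd x y x1 y1 x2 y2 R2 p q :
  C2d x y x1 y1 x2 y2 -> 0 < R2 -> p < q ->
  (forall t, p <= t <= q -> goodpt x1 y1 x2 y2 R2 t) ->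
  (forall s, p < s < q -> 0 <= x1 s * (y p - y s) - y1 s * (x p - x s)) ->
  tX x1 y1 q * (x p - x q) + tY x1 y1 q * (y p - y q) < 0 ->
  (tX x1 y1 q * (x p - x q) + tY x1 y1 q * (y p - y q)) ^ 2 <=
    2 * R2 * (tX x1 y1 q * (y p - y q) - tY x1 y1 q * (x p - x q)).
Proof.
  intros C2 HR Hpq Hg Hs Hneg.
  destruct (frame_unit x1 y1 q (proj1 (Hg q ltac:(lra)))) as [U [N T]].
  assert (E := frame_gen x y x1 y1 x2 y2 R2 C2 q (q - p) (-1) (tX x1 y1 q) (tY x1 y1 q) 0 0
     ltac:(lra) HR (or_intror eq_refl) U N T).
  replace (q + -1 * (q - p)) with p in E by ring.
  apply E.
  - intros t Ht. apply (Hg (q + -1 * t)). lra.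
  - intros t Ht. apply (Hg (q + -1 * t)). lra.
  - intros t Ht. apply (Hs (q + -1 * t)). lra.
  - lra.
Qed.

Lemma final0 c s al be R2 de w :
  c ^ 2 + s ^ 2 = 1 -> 0 < R2 -> 0 < de -> 0 <= w -> 4 * R2 * de < w ^ 2 ->
  w < Rabs al -> Rabs be < 2 * de -> 0 <= s * al ->
  (c * al + s * be) ^ 2 <= 2 * R2 * (- s * al + c * be) -> False.
Proof.
  intros Hu HR Hd Hw Hw2 Ha Hb Hs Hp.
  set (N := - s * al + c * be) in *.
  assert (HN0 : 0 <= N). { pose proof (pow2_ge_0 (c * al + s * be)). nra. }
  assert (Hc : c * be <= Rabs be).
  { assert (c ^ 2 <= 1) by (pose proof (pow2_ge_0 s); lra).
    assert (Rabs c <= 1). { rewrite <- (sqrt_pow2 (Rabs c)) by apply Rabs_pos.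
      rewrite <- sqrt_1. apply sqrt_le_1_alt. rewrite pow2_abs. lra. }
    eapply Rle_trans. apply RRle_abs. rewrite Rabs_mult.
    pose proof (Rabs_pos be). nra. }
  assert (HN : N <= Rabs be) by (unfold N; lra).
  assert (Hsum : (c * al + s * be) ^ 2 + N ^ 2 = al ^ 2 + be ^ 2).
  { unfold N. replace (al ^ 2 + be ^ 2) with ((c ^ 2 + s ^ 2) * (al ^ 2 + be ^ 2)) by (rewrite Hu; ring). ring. }
  assert (N ^ 2 <= be ^ 2).
  { rewrite <- (pow2_abs be). pose proof (Rabs_pos be).
    assert (0 <= (Rabs be - N) * (Rabs be + N)) by (apply Rmult_le_pos; lra). simpl. lra. }
  assert (al ^ 2 > w ^ 2).
  { rewrite <- (pow2_abs al).
    assert (0 < (Rabs al - w) * (Rabs al + w)) by (apply Rmult_lt_0_compat; lra).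
    simpl. lra. }
  assert (2 * R2 * N <= 2 * R2 * Rabs be) by nra.
  assert (2 * R2 * Rabs be < 4 * R2 * de) by nra.
  nra.
Qed.

Lemma per_deriv (f f' : R -> R) P : (forall t, f (t + P) = f t) ->
  (forall t, is_derive f t (f' t)) -> forall t, f' (t + P) = f' t.
Proof.
  intros Hp Hd t.
  assert (H1 : is_derive f t (f' (t + P))).
  { apply (is_derive_extR (fun s => f (s + P))). intro; apply Hp.
    eapply is_derive_ext_v. apply (is_derive_comp f (fun s => s + P)). apply Hd.
    eapply is_derive_ext_v. apply (is_derive_plus (fun s => s) (fun _ => P)).
    apply (is_derive_id t). apply is_derive_cst. unfold plus, one, zero; simpl. reflexivity.
    unfold scal; simpl. unfold mult; simpl. ring. }
  rewrite <- (is_derive_unique _ _ _ H1). rewrite (is_derive_unique _ _ _ (Hd t)). reflexivity.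
Qed.

Lemma C2d_of x y x1 y1 x2 y2 : C2_param x y x1 y1 x2 y2 -> C2d x y x1 y1 x2 y2.
Proof. intros H t. destruct (H t) as [A [B [C [D _]]]]. auto. Qed.

Section Closed.
Variables (x y x1 y1 x2 y2 : R -> R) (a b R1 R2 : R).
Hypothesis C2 : C2_param x y x1 y1 x2 y2.
Hypothesis Hreg : regular_on x1 y1 x2 y2 a b.
Hypothesis Hk : forall t, a <= t <= b -> 0 < curvature x1 y1 x2 y2 t.
Hypothesis Hrho : forall t, a <= t <= b -> R1 <= 1 / curvature x1 y1 x2 y2 t <= R2.
Hypothesis Hcl : closed_convex_curve x y a b.

Let P := b - a.

Lemma cl_ab : a < b.
Proof. destruct Hcl; auto. Qed.

Lemma cl_per : forall t, x (t + P) = x t /\ y (t + P) = y t /\ x1 (t + P) = x1 t /\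
  y1 (t + P) = y1 t /\ x2 (t + P) = x2 t /\ y2 (t + P) = y2 t.
Proof.
  destruct Hcl as [_ [Hp _]].
  assert (px : forall t, x (t + P) = x t) by (intro; apply Hp).
  assert (py : forall t, y (t + P) = y t) by (intro; apply Hp).
  assert (px1 := per_deriv x x1 P px ltac:(intro; apply C2)).
  assert (py1 := per_deriv y y1 P py ltac:(intro; apply C2)).
  assert (px2 := per_deriv x1 x2 P px1 ltac:(intro; apply C2)).
  assert (py2 := per_deriv y1 y2 P py1 ltac:(intro; apply C2)).
  intro t; repeat split; auto.
Qed.

Lemma cl_shift t : 2 * a - b <= t <= 2 * b - a -> exists t', a <= t' <= b /\
  x t = x t' /\ y t = y t' /\ x1 t = x1 t' /\ y1 t = y1 t' /\ x2 t = x2 t' /\ y2 t = y2 t'.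
Proof.
  intros Ht. pose proof cl_ab.
  destruct (Rle_lt_dec a t).
  - destruct (Rle_lt_dec t b).
    + exists t. repeat split; auto.
    + exists (t - P). unfold P in *. split. lra.
      destruct (cl_per (t - P)) as [A [B [C [D [E F]]]]].
      replace (t - P + P) with t in * by ring. repeat split; auto.
  - exists (t + P). unfold P in *. split. lra.
    destruct (cl_per t) as [A [B [C [D [E F]]]]]. repeat split; auto.
Qed.

Lemma cl_good t : 2 * a - b <= t <= 2 * b - a -> goodpt x1 y1 x2 y2 R2 t /\
  0 < x1 t * y2 t - y1 t * x2 t.
Proof.
  intros Ht. destruct (cl_shift t Ht) as [t' [Ht' [_ [_ [A [B [C D]]]]]]].
  destruct (curv_facts x1 y1 x2 y2 a b R1 R2 Hreg Hk Hrho t' Ht') as [E [F G]].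
  unfold goodpt. rewrite A, B, C, D. auto.
Qed.

Lemma cl_oncurve t : 2 * a - b <= t <= 2 * b - a -> on_curve x y a b (x t, y t).
Proof.
  intros Ht. destruct (cl_shift t Ht) as [t' [Ht' [A [B _]]]].
  exists t'. split; auto. rewrite A, B. auto.
Qed.

Lemma cl_sup s Q : 2 * a - b <= s <= 2 * b - a -> on_curve x y a b Q ->
  0 <= x1 s * (snd Q - y s) - y1 s * (fst Q - x s).
Proof.
  intros Hs HQ. pose proof cl_ab.
  destruct (cl_shift s Hs) as [s' [Hs' [A [B [C [D _]]]]]]. rewrite A, B, C, D.
  destruct Hcl as [_ [_ [_ [K [Kc [_ [_ Kb]]]]]]].
  destruct (cl_good s' ltac:(lra)) as [[G1 _] G2].
  apply (sup_core K x y (x1 s') (y1 s') s' Kc).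
  - apply is_derive_Reals. apply C2.
  - apply is_derive_Reals. apply C2.
  - auto.
  - exists (b - a). split. lra. intros t Ht. apply Kb. apply cl_oncurve.
    apply Rabs_def2 in Ht. lra.
  - apply (strict_left x y x1 y1 x2 y2 s' (C2d_of _ _ _ _ _ _ C2) G2).
  - apply Kb. auto.
Qed.


Lemma cl_para p0 q0 : a <= p0 <= b -> a <= q0 <= b -> 0 < R2 ->
  (tX x1 y1 p0 * (x q0 - x p0) + tY x1 y1 p0 * (y q0 - y p0)) ^ 2 <=
    2 * R2 * (tX x1 y1 p0 * (y q0 - y p0) - tY x1 y1 p0 * (x q0 - x p0)).
Proof.
  intros Hp Hq HR. pose proof cl_ab as Hab.
  assert (C2' := C2d_of _ _ _ _ _ _ C2).
  set (tx := tX x1 y1 p0). set (ty := tY x1 y1 p0).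
  set (g := tx * (x q0 - x p0) + ty * (y q0 - y p0)).
  assert (Hgood : forall t, 2 * a - b <= t <= 2 * b - a -> goodpt x1 y1 x2 y2 R2 t)
    by (intros; apply cl_good; auto).
  assert (Hsup : forall s t, 2 * a - b <= s <= 2 * b - a -> a <= t <= b ->
     0 <= x1 s * (y t - y s) - y1 s * (x t - x s)).
  { intros s t Hs Ht. apply (cl_sup s (x t, y t) Hs). exists t; auto. }
  assert (Pab : x (a + P) = x a /\ y (a + P) = y a) by (destruct (cl_per a) as [A [B _]]; auto).
  replace (a + P) with b in Pab by (unfold P; ring).
  destruct (Rtotal_order g 0) as [Hg|[Hg|Hg]]; unfold g, tx, ty in *.
  -
    destruct (Rlt_le_dec q0 p0) as [Hqp|Hqp].
    + apply (para_bwd x y x1 y1 x2 y2 R2 q0 p0 C2' HR Hqp).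
      * intros t Ht. apply Hgood. lra.
      * intros s Hs. apply Hsup; lra.
      * exact Hg.
    + set (q' := q0 - P).
      destruct (cl_per q') as [A [B _]]. unfold q' in A, B. replace (q0 - P + P) with q0 in A, B by ring.
      assert (Hq'p : q' < p0).
      { unfold q', P. destruct (Rlt_le_dec (q0 - (b - a)) p0); auto. exfalso.
        assert (q0 = b) by lra. assert (p0 = a) by lra. subst.
        unfold g in Hg. destruct Pab as [E1 E2]. rewrite E1, E2 in Hg. lra. }
      pose proof (para_bwd x y x1 y1 x2 y2 R2 q' p0 C2' HR Hq'p) as E.
      unfold q' in E. rewrite A, B. apply E.
      * intros t Ht. apply Hgood. unfold q', P in *. lra.
      * intros s Hs. rewrite <- A, <- B. apply Hsup; unfold q', P in *; lra.
      * rewrite <- A, <- B. exact Hg.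
 - rewrite Hg. fold tx ty. 
    assert (0 <= tx * (y q0 - y p0) - ty * (x q0 - x p0)); [|nra].
    destruct (cl_good p0 ltac:(lra)) as [[G1 _] _].
    assert (Hs := Hsup p0 q0 ltac:(lra) Hq).
    unfold tx, ty, tX, tY.
    replace (x1 p0 / sqrt (x1 p0 ^ 2 + y1 p0 ^ 2) * (y q0 - y p0) -
      y1 p0 / sqrt (x1 p0 ^ 2 + y1 p0 ^ 2) * (x q0 - x p0)) with
      ((x1 p0 * (y q0 - y p0) - y1 p0 * (x q0 - x p0)) / sqrt (x1 p0 ^ 2 + y1 p0 ^ 2))
      by (field; apply Rgt_not_eq; apply sqrt_lt_R0; auto).
    apply Rdiv_le_0_compat; auto. apply sqrt_lt_R0; auto.
  - destruct (Rlt_le_dec p0 q0) as [Hpq|Hpq].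
    + apply (para_fwd x y x1 y1 x2 y2 R2 p0 q0 C2' HR Hpq).
      * intros t Ht. apply Hgood. lra.
      * intros s Hs. apply Hsup; lra.
      * exact Hg.
    + set (q' := q0 + P).
      destruct (cl_per q0) as [A [B _]]. fold q' in A, B.
      assert (Hpq' : p0 < q').
      { unfold q', P. destruct (Rlt_le_dec p0 (q0 + (b - a))); auto. exfalso.
        assert (q0 = a) by lra. assert (p0 = b) by lra. subst.
        unfold g in Hg. destruct Pab as [E1 E2]. rewrite E1, E2 in Hg. lra. }
      pose proof (para_fwd x y x1 y1 x2 y2 R2 p0 q' C2' HR Hpq') as E.
      rewrite <- A, <- B. apply E.
      * intros t Ht. apply Hgood. unfold q', P in *. lra.
      * intros s Hs. rewrite A, B. apply Hsup; unfold q', P in *; lra.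
      * rewrite A, B. exact Hg.
Qed.

End Closed.

Lemma cpt_pow (f : R -> R) x n : continuity_pt f x -> continuity_pt (fun t => f t ^ n) x.
Proof.
  intros H. induction n.
  - simpl. apply continuity_pt_const. intros u v; auto.
  - simpl. apply (continuity_pt_mult f (fun t => f t ^ n)); auto.
Qed.

Definition clamp (a b t : R) := Rmax a (Rmin b t).

Lemma clamp_in a b t : a <= b -> a <= clamp a b t <= b.
Proof. intros. unfold clamp, Rmax, Rmin. repeat destruct Rle_dec; lra. Qed.

Lemma clamp_id a b t : a <= t <= b -> clamp a b t = t.
Proof. intros. unfold clamp, Rmax, Rmin. repeat destruct Rle_dec; lra. Qed.

Lemma clamp_cont a b t : a <= b -> continuity_pt (clamp a b) t.
Proof.
  intros Hab eps Heps. exists eps. split; auto. intros u [_ Hu]. simpl in *. unfold Rdist in *.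
  eapply Rle_lt_trans; [|exact Hu].
  unfold clamp, Rmax, Rmin. repeat destruct Rle_dec; split_Rabs; lra.
Qed.

Section Angle.
Variables (x y x1 y1 x2 y2 : R -> R) (a b : R).
Hypothesis C2 : C2_param x y x1 y1 x2 y2.
Hypothesis Hab : a < b.
Hypothesis Hreg : forall t, a <= t <= b -> 0 < x1 t ^ 2 + y1 t ^ 2.
Hypothesis Hdpos : forall t, a <= t <= b -> 0 < x1 t * y2 t - y1 t * x2 t.

Let G t := curvature x1 y1 x2 y2 t * speed x1 y1 t.
Let F t := G (clamp a b t).
Let Th t := RInt F a t.

Lemma G_val t : a <= t <= b -> G t = (x1 t * y2 t - y1 t * x2 t) / (x1 t ^ 2 + y1 t ^ 2).
Proof.
  intros Ht. unfold G, curvature, speed. pose proof (Hreg t Ht).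
  assert (0 < sqrt (x1 t ^ 2 + y1 t ^ 2)) by (apply sqrt_lt_R0; auto).
  rewrite <- (pow2_sqrt (x1 t ^ 2 + y1 t ^ 2)) at 3 by lra. field. lra.
Qed.

Lemma G_cont t : a <= t <= b -> continuity_pt G t.
Proof.
  intros Ht. pose proof (Hreg t Ht).
  assert (cx1 : continuity_pt x1 t) by (apply (deriv_cont_pt _ _ (x2 t)); apply C2).
  assert (cy1 : continuity_pt y1 t) by (apply (deriv_cont_pt _ _ (y2 t)); apply C2).
  assert (cx2 : continuity_pt x2 t) by (apply continuity_pt_filterlim; apply C2).
  assert (cy2 : continuity_pt y2 t) by (apply continuity_pt_filterlim; apply C2).
  assert (csq : continuity_pt (fun t => x1 t ^ 2 + y1 t ^ 2) t).
  { apply (continuity_pt_plus (fun t => x1 t ^ 2) (fun t => y1 t ^ 2)); apply cpt_pow; auto. }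
  assert (csp : continuity_pt (speed x1 y1) t).
  { unfold speed. apply (continuity_pt_comp (fun t => x1 t ^ 2 + y1 t ^ 2) sqrt); auto.
    apply continuity_pt_sqrt. lra. }
  assert (0 < speed x1 y1 t) by (apply sqrt_lt_R0; auto).
  unfold G, curvature.
  apply (continuity_pt_mult (fun t => (x1 t * y2 t - y1 t * x2 t) / speed x1 y1 t ^ 3) (speed x1 y1)); auto.
  apply (continuity_pt_div (fun t => x1 t * y2 t - y1 t * x2 t) (fun t => speed x1 y1 t ^ 3)).
  - apply (continuity_pt_minus (fun t => x1 t * y2 t) (fun t => y1 t * x2 t));
    apply (continuity_pt_mult); auto.
  - apply cpt_pow; auto.
  - apply Rgt_not_eq. apply pow_lt. auto.
Qed.

Lemma F_cont t : continuous F t.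
Proof.
  apply continuity_pt_filterlim. unfold F.
  apply (continuity_pt_comp (clamp a b) G). apply clamp_cont; lra.
  apply G_cont. apply clamp_in; lra.
Qed.

Lemma Th_deriv t : a <= t <= b -> is_derive Th t ((x1 t * y2 t - y1 t * x2 t) / (x1 t ^ 2 + y1 t ^ 2)).
Proof.
  intros Ht. rewrite <- G_val by auto.
  replace (G t) with (F t) by (unfold F; rewrite clamp_id; auto).
  apply (is_derive_RInt F Th a t).
  - apply filter_forall. intro u.
    exact (RInt_correct F a u (ex_RInt_continuous F a u (fun z _ => F_cont z))).
  - apply F_cont.
Qed.

Lemma Th_total : Th b - Th a = total_curvature x1 y1 x2 y2 a b.
Proof.
  unfold Th. rewrite RInt_point. unfold total_curvature.
  rewrite Rminus_0_r. apply RInt_ext. intros u Hu.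
  unfold Rmin, Rmax in Hu. destruct Rle_dec; [|lra].
  unfold F. rewrite clamp_id; auto. lra.
Qed.


Lemma Th_mono t t' : a <= t -> t <= t' -> t' <= b -> Th t <= Th t'.
Proof.
  intros. apply (mono_deriv Th (fun t => (x1 t * y2 t - y1 t * x2 t) / (x1 t ^ 2 + y1 t ^ 2))); auto.
  intros; apply Th_deriv; lra.
  intros u Hu. apply Rlt_le, Rdiv_lt_0_compat; [apply Hdpos|apply Hreg]; lra.
Qed.

Let sp t := sqrt (x1 t ^ 2 + y1 t ^ 2).
Let ex t := x1 t / sp t.
Let ey t := y1 t / sp t.

Lemma sp_pos t : a <= t <= b -> 0 < sp t.
Proof. intros; apply sqrt_lt_R0; apply Hreg; auto. Qed.

Lemma sp_sq t : a <= t <= b -> sp t ^ 2 = x1 t ^ 2 + y1 t ^ 2.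
Proof. intros; apply pow2_sqrt. pose proof (Hreg t H); lra. Qed.

Lemma sp_deriv t : a <= t <= b -> is_derive sp t ((x1 t * x2 t + y1 t * y2 t) / sp t).
Proof.
  intros Ht. eapply is_derive_ext_v.
  apply (is_derive_sqrt (fun t => x1 t ^ 2 + y1 t ^ 2) t (INR 2 * x2 t * x1 t ^ 1 + INR 2 * y2 t * y1 t ^ 1)).
  - apply (is_derive_plus (fun t => x1 t ^ 2) (fun t => y1 t ^ 2)).
    apply (is_derive_pow x1 2 t (x2 t)); apply C2.
    apply (is_derive_pow y1 2 t (y2 t)); apply C2.
  - apply Hreg; auto.
  - pose proof (sp_pos t Ht). unfold sp in *. rewrite !pow_1.
    replace (INR 2) with 2 by (simpl; lra). field. lra.
Qed.

Lemma ex_deriv t : a <= t <= b -> is_derive ex t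
   (- ((x1 t * y2 t - y1 t * x2 t) / (x1 t ^ 2 + y1 t ^ 2)) * ey t).
Proof.
  intros Ht. pose proof (sp_pos t Ht). pose proof (sp_sq t Ht).
  eapply is_derive_ext_v. apply (is_derive_div x1 sp t (x2 t)); [apply C2|apply sp_deriv; auto|lra].
  unfold ey. set (sq := sp t) in *. set (d := x1 t * y2 t - y1 t * x2 t).
  transitivity ((x2 t * sq ^ 2 - x1 t * (x1 t * x2 t + y1 t * y2 t)) / sq ^ 3).
  field; lra. rewrite H0.
  transitivity (- d * y1 t / sq ^ 3). f_equal. unfold d; ring.
  rewrite <- H0. field. lra.
Qed.

Lemma ey_deriv t : a <= t <= b -> is_derive ey t
   (((x1 t * y2 t - y1 t * x2 t) / (x1 t ^ 2 + y1 t ^ 2)) * ex t).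
Proof.
  intros Ht. pose proof (sp_pos t Ht). pose proof (sp_sq t Ht).
  eapply is_derive_ext_v. apply (is_derive_div y1 sp t (y2 t)); [apply C2|apply sp_deriv; auto|lra].
  unfold ex. set (sq := sp t) in *. set (d := x1 t * y2 t - y1 t * x2 t).
  transitivity ((y2 t * sq ^ 2 - y1 t * (x1 t * x2 t + y1 t * y2 t)) / sq ^ 3).
  field; lra. rewrite H0.
  transitivity (d * x1 t / sq ^ 3). f_equal. unfold d; ring.
  rewrite <- H0. field. lra.
Qed.

Lemma cosTh_deriv t : a <= t <= b -> is_derive (fun t => cos (Th t)) t
   (- sin (Th t) * ((x1 t * y2 t - y1 t * x2 t) / (x1 t ^ 2 + y1 t ^ 2))).
Proof.
  intros Ht. eapply is_derive_ext_v. apply (is_derive_comp cos Th).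
  apply is_derive_Reals. apply derivable_pt_lim_cos. apply Th_deriv; auto.
  unfold scal; simpl; unfold mult; simpl. ring.
Qed.

Lemma sinTh_deriv t : a <= t <= b -> is_derive (fun t => sin (Th t)) t
   (cos (Th t) * ((x1 t * y2 t - y1 t * x2 t) / (x1 t ^ 2 + y1 t ^ 2))).
Proof.
  intros Ht. eapply is_derive_ext_v. apply (is_derive_comp sin Th).
  apply is_derive_Reals. apply derivable_pt_lim_sin. apply Th_deriv; auto.
  unfold scal; simpl; unfold mult; simpl. ring.
Qed.

Lemma Z_const t0 t : a <= t0 <= b -> a <= t <= b ->
  cos (Th t) * ex t + sin (Th t) * ey t = cos (Th t0) * ex t0 + sin (Th t0) * ey t0 /\
  - sin (Th t) * ex t + cos (Th t) * ey t = - sin (Th t0) * ex t0 + cos (Th t0) * ey t0.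
Proof.
  intros H0 H1.
  assert (K : forall (f df : R -> R), (forall u, a <= u <= b -> is_derive f u (df u)) ->
     (forall u, a <= u <= b -> df u = 0) -> f t = f t0).
  { intros f df Hd Hz. destruct (Rle_lt_dec t t0).
    - apply (const_deriv f df); auto; intros; [apply Hd|apply Hz]; lra.
    - symmetry. apply (const_deriv f df); try lra; intros; [apply Hd|apply Hz]; lra. }
  split.
  - apply (K (fun u => cos (Th u) * ex u + sin (Th u) * ey u)
      (fun u => (- sin (Th u) * ((x1 u * y2 u - y1 u * x2 u) / (x1 u ^ 2 + y1 u ^ 2))) * ex u
          + cos (Th u) * (- ((x1 u * y2 u - y1 u * x2 u) / (x1 u ^ 2 + y1 u ^ 2)) * ey u)
          + ((cos (Th u) * ((x1 u * y2 u - y1 u * x2 u) / (x1 u ^ 2 + y1 u ^ 2))) * ey u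
          + sin (Th u) * (((x1 u * y2 u - y1 u * x2 u) / (x1 u ^ 2 + y1 u ^ 2)) * ex u)))).
    + intros u Hu. apply (is_derive_plus (fun u => cos (Th u) * ex u) (fun u => sin (Th u) * ey u)).
      * apply (is_derive_mult (fun u => cos (Th u)) ex). apply cosTh_deriv; auto. apply ex_deriv; auto.
        intros; apply Rmult_comm.
      * apply (is_derive_mult (fun u => sin (Th u)) ey). apply sinTh_deriv; auto. apply ey_deriv; auto.
        intros; apply Rmult_comm.
    + intros; ring.
  - apply (K (fun u => - sin (Th u) * ex u + cos (Th u) * ey u)
      (fun u => (- (cos (Th u) * ((x1 u * y2 u - y1 u * x2 u) / (x1 u ^ 2 + y1 u ^ 2)))) * ex u
          + - sin (Th u) * (- ((x1 u * y2 u - y1 u * x2 u) / (x1 u ^ 2 + y1 u ^ 2)) * ey u)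
          + ((- sin (Th u) * ((x1 u * y2 u - y1 u * x2 u) / (x1 u ^ 2 + y1 u ^ 2))) * ey u
          + cos (Th u) * (((x1 u * y2 u - y1 u * x2 u) / (x1 u ^ 2 + y1 u ^ 2)) * ex u)))).
    + intros u Hu. apply (is_derive_plus (fun u => - sin (Th u) * ex u) (fun u => cos (Th u) * ey u)).
      * apply (is_derive_mult (fun u => - sin (Th u)) ex).
        apply (is_derive_opp (fun u => sin (Th u))). apply sinTh_deriv; auto. apply ex_deriv; auto.
        intros; apply Rmult_comm.
      * apply (is_derive_mult (fun u => cos (Th u)) ey). apply cosTh_deriv; auto. apply ey_deriv; auto.
        intros; apply Rmult_comm.
    + intros; ring.
Qed.

Lemma rot_rep t0 t : a <= t0 <= b -> a <= t <= b ->
  ex t = cos (Th t - Th t0) * ex t0 - sin (Th t - Th t0) * ey t0 /\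
  ey t = sin (Th t - Th t0) * ex t0 + cos (Th t - Th t0) * ey t0.
Proof.
  intros H0 H1. destruct (Z_const t0 t H0 H1) as [Z1 Z2].
  rewrite cos_minus, sin_minus.
  pose proof (sin2_cos2 (Th t)) as SC. unfold Rsqr in SC.
  set (A := Th t) in *. set (B := Th t0) in *.
  split.
  - replace (ex t) with (cos A * (cos A * ex t + sin A * ey t) - sin A * (- sin A * ex t + cos A * ey t))
      by (transitivity ((sin A * sin A + cos A * cos A) * ex t); [ring| rewrite SC; ring]).
    rewrite Z1, Z2. ring.
  - replace (ey t) with (sin A * (cos A * ex t + sin A * ey t) + cos A * (- sin A * ex t + cos A * ey t))
      by (transitivity ((sin A * sin A + cos A * cos A) * ey t); [ring| rewrite SC; ring]).
    rewrite Z1, Z2. ring.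
Qed.

End Angle.

Lemma angle_exists x y x1 y1 x2 y2 a b :
  C2_param x y x1 y1 x2 y2 -> a < b ->
  (forall t, a <= t <= b -> 0 < x1 t ^ 2 + y1 t ^ 2) ->
  (forall t, a <= t <= b -> 0 < x1 t * y2 t - y1 t * x2 t) ->
  exists Th : R -> R,
    (forall t t', a <= t -> t <= t' -> t' <= b -> Th t <= Th t') /\
    Th b - Th a = total_curvature x1 y1 x2 y2 a b /\
    (forall t0 t, a <= t0 <= b -> a <= t <= b ->
      tX x1 y1 t = cos (Th t - Th t0) * tX x1 y1 t0 - sin (Th t - Th t0) * tY x1 y1 t0 /\
      tY x1 y1 t = sin (Th t - Th t0) * tX x1 y1 t0 + cos (Th t - Th t0) * tY x1 y1 t0).
Proof.
  intros C2 Hab Hreg Hd.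
  exists (fun t => RInt (fun t => curvature x1 y1 x2 y2 (clamp a b t) * speed x1 y1 (clamp a b t)) a t).
  split; [|split].
  - intros t t' H1 H2 H3. exact (Th_mono x y x1 y1 x2 y2 a b C2 Hab Hreg Hd t t' H1 H2 H3).
  - exact (Th_total x1 y1 x2 y2 a b Hab).
  - intros t0 t H0 H1. unfold tX, tY. exact (rot_rep x y x1 y1 x2 y2 a b C2 Hab Hreg t0 t H0 H1).
Qed.

Section Arc.
Variables (x y x1 y1 x2 y2 : R -> R) (a b R1 R2 : R).
Hypothesis C2 : C2_param x y x1 y1 x2 y2.
Hypothesis Hreg : regular_on x1 y1 x2 y2 a b.
Hypothesis Hk : forall t, a <= t <= b -> 0 < curvature x1 y1 x2 y2 t.
Hypothesis Hrho : forall t, a <= t <= b -> R1 <= 1 / curvature x1 y1 x2 y2 t <= R2.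
Hypothesis Harc : convex_arc x y a b.

Lemma arc_sup_open s t : a < s < b -> a <= t <= b ->
  0 <= x1 s * (y t - y s) - y1 s * (x t - x s).
Proof.
  intros Hs Ht.
  destruct Harc as [Hab [_ [K [Kc [_ Kb]]]]].
  destruct (curv_facts x1 y1 x2 y2 a b R1 R2 Hreg Hk Hrho s ltac:(lra)) as [G1 [_ G2]].
  refine (sup_core K x y (x1 s) (y1 s) s Kc _ _ G1 _ _ (x t, y t) _).
  - apply is_derive_Reals. apply C2.
  - apply is_derive_Reals. apply C2.
  - exists (Rmin (s - a) (b - s)). split. unfold Rmin; destruct Rle_dec; lra.
    intros t' Ht'. apply Kb. apply Rabs_def2 in Ht'. unfold Rmin in Ht'; destruct Rle_dec; lra.
  - apply (strict_left x y x1 y1 x2 y2 s (C2d_of _ _ _ _ _ _ C2) G2).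
  - apply Kb. auto.
Qed.

Lemma arc_sup s t : a <= s <= b -> a <= t <= b ->
  0 <= x1 s * (y t - y s) - y1 s * (x t - x s).
Proof.
  intros Hs Ht. destruct Harc as [Hab _].
  set (f := fun s => x1 s * (y t - y s) - y1 s * (x t - x s)).
  assert (cf : forall s, continuity_pt f s).
  { intro u. unfold f.
    assert (cx : continuity_pt x u) by (apply (deriv_cont_pt _ _ (x1 u)); apply C2).
    assert (cy : continuity_pt y u) by (apply (deriv_cont_pt _ _ (y1 u)); apply C2).
    assert (cx1 : continuity_pt x1 u) by (apply (deriv_cont_pt _ _ (x2 u)); apply C2).
    assert (cy1 : continuity_pt y1 u) by (apply (deriv_cont_pt _ _ (y2 u)); apply C2).
    apply (continuity_pt_minus (fun s => x1 s * (y t - y s)) (fun s => y1 s * (x t - x s)));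
    apply continuity_pt_mult; auto;
    apply (continuity_pt_minus (fun _ => _)); auto; apply continuity_pt_const; intros ? ?; auto. }
  destruct (Rle_lt_dec 0 (f s)) as [ok|Hneg]; [exact ok|exfalso].
  destruct (cont_neg f s (cf s) Hneg) as [e [He Hf]].
  destruct (Req_dec s a) as [Ea|Na].
  - set (s' := a + Rmin e (b - a) / 2).
    assert (Hs' : a < s' < b) by (unfold s', Rmin; destruct Rle_dec; lra).
    assert (f s' < 0) by (apply Hf; unfold s', Rmin; destruct Rle_dec; apply Rabs_def1; lra).
    pose proof (arc_sup_open s' t Hs' Ht). unfold f in H. lra.
  - destruct (Req_dec s b) as [Eb|Nb].
    + set (s' := b - Rmin e (b - a) / 2).
      assert (Hs' : a < s' < b) by (unfold s', Rmin; destruct Rle_dec; lra).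
      assert (f s' < 0) by (apply Hf; unfold s', Rmin; destruct Rle_dec; apply Rabs_def1; lra).
      pose proof (arc_sup_open s' t Hs' Ht). unfold f in H. lra.
    + pose proof (arc_sup_open s t ltac:(lra) Ht). unfold f in Hneg. lra.
Qed.

End Arc.

Lemma numeric_w R2 dL de : 0 < R2 -> 0 < dL -> 0 < de ->
  de < dL ^ 2 / (2 * (R2 + dL + sqrt ((R2 + dL) ^ 2 - dL ^ 2))) ->
  0 < dL - 2 * de /\ 4 * R2 * de < (dL - 2 * de) ^ 2.
Proof.
  intros HR HdL Hd Hb.
  set (S := sqrt ((R2 + dL) ^ 2 - dL ^ 2)) in *.
  assert (HS0 : 0 <= S) by apply sqrt_pos.
  assert (HS2 : S ^ 2 = (R2 + dL) ^ 2 - dL ^ 2) by (apply pow2_sqrt; nra).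
  assert (HD : 0 < 2 * (R2 + dL + S)) by lra.
  assert (Hk : 2 * de * (R2 + dL + S) < dL ^ 2).
  { apply Rmult_lt_compat_r with (r := 2 * (R2 + dL + S)) in Hb; auto.
    unfold Rdiv in Hb. rewrite Rmult_assoc, Rinv_l in Hb by lra. lra. }
  set (s0 := R2 + dL) in *. set (k := 2 * de).
  assert (Hks : k < s0 - S).
  { assert (k * (s0 + S) < (s0 - S) * (s0 + S)) by (unfold k; nra).
    apply Rmult_lt_reg_r with (s0 + S). unfold s0 in *; lra. lra. }
  assert (HsS : s0 - S <= dL).
  { assert ((s0 - S) * (s0 + S) = dL ^ 2) by nra.
    destruct (Rle_lt_dec (s0 - S) dL); auto.
    assert (dL * dL < (s0 - S) * (s0 + S)) by (apply Rmult_le_0_lt_compat; unfold s0 in *; lra).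
    nra. }
  split. unfold k in *; lra.
  assert (0 < (s0 - S - k) * (s0 + S - k)) by (apply Rmult_lt_0_compat; lra).
  unfold k, s0 in *. nra.
Qed.

Lemma proj_bound ux uy (Q X : pt) de : ux ^ 2 + uy ^ 2 = 1 -> dist2 Q X < de ->
  Rabs (ux * (fst Q - fst X) + uy * (snd Q - snd X)) < de /\
  Rabs (- uy * (fst Q - fst X) + ux * (snd Q - snd X)) < de.
Proof.
  intros Hu Hd. unfold dist2 in Hd.
  assert (U2 : (- uy) ^ 2 + ux ^ 2 = 1) by lra.
  assert (U3 : (- ux) ^ 2 + (- uy) ^ 2 = 1) by lra.
  assert (U4 : uy ^ 2 + (- ux) ^ 2 = 1) by lra.
  split; apply Rabs_def1.
  - eapply Rle_lt_trans; [apply cs_bound; exact Hu|]. auto.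
  - assert (- ux * (fst Q - fst X) + - uy * (snd Q - snd X) < de)
      by (eapply Rle_lt_trans; [apply cs_bound; exact U3|]; auto). lra.
  - eapply Rle_lt_trans; [apply cs_bound; exact U2|]. auto.
  - assert (uy * (fst Q - fst X) + - ux * (snd Q - snd X) < de)
      by (eapply Rle_lt_trans; [apply cs_bound; exact U4|]; auto). lra.
Qed.

Lemma final_frame tx ty ux uy Dx Dy R2 de w :
  tx ^ 2 + ty ^ 2 = 1 -> ux ^ 2 + uy ^ 2 = 1 -> 0 < R2 -> 0 < de -> 0 <= w ->
  4 * R2 * de < w ^ 2 ->
  w < Rabs (ux * Dx + uy * Dy) -> Rabs (- uy * Dx + ux * Dy) < 2 * de ->
  0 <= (- tx * uy + ty * ux) * (ux * Dx + uy * Dy) ->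
  (tx * Dx + ty * Dy) ^ 2 <= 2 * R2 * (tx * Dy - ty * Dx) -> False.
Proof.
  intros Ht Hu HR Hd Hw Hw2 Ha Hb Hs Hp.
  set (c := tx * ux + ty * uy). set (s := - tx * uy + ty * ux).
  set (al := ux * Dx + uy * Dy) in *. set (be := - uy * Dx + ux * Dy) in *.
  assert (E1 : tx * Dx + ty * Dy = c * al + s * be).
  { unfold c, s, al, be. transitivity ((tx * Dx + ty * Dy) * (ux ^ 2 + uy ^ 2)). rewrite Hu; ring. ring. }
  assert (E2 : tx * Dy - ty * Dx = - s * al + c * be).
  { unfold c, s, al, be. transitivity ((tx * Dy - ty * Dx) * (ux ^ 2 + uy ^ 2)). rewrite Hu; ring. ring. }
  assert (E3 : c ^ 2 + s ^ 2 = 1).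
  { unfold c, s. transitivity ((tx ^ 2 + ty ^ 2) * (ux ^ 2 + uy ^ 2)). ring. rewrite Ht, Hu; ring. }
  rewrite E1, E2 in Hp.
  apply (final0 c s al be R2 de w E3 HR Hd Hw Hw2 Ha Hb Hs Hp).
Qed.

Section ArcMain.
Variables (x y x1 y1 x2 y2 : R -> R) (a b R1 R2 : R).
Hypothesis C2 : C2_param x y x1 y1 x2 y2.
Hypothesis Hreg : regular_on x1 y1 x2 y2 a b.
Hypothesis Hk : forall t, a <= t <= b -> 0 < curvature x1 y1 x2 y2 t.
Hypothesis Hrho : forall t, a <= t <= b -> R1 <= 1 / curvature x1 y1 x2 y2 t <= R2.
Hypothesis Harc : convex_arc x y a b.
Hypothesis Htot : total_curvature x1 y1 x2 y2 a b <= PI.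
Hypothesis HR2 : 0 < R2.

Definition parab p q := (tX x1 y1 p * (x q - x p) + tY x1 y1 p * (y q - y p)) ^ 2 <=
    2 * R2 * (tX x1 y1 p * (y q - y p) - tY x1 y1 p * (x q - x p)).

Lemma arc_good t : a <= t <= b -> goodpt x1 y1 x2 y2 R2 t.
Proof.
  intros Ht. destruct (curv_facts x1 y1 x2 y2 a b R1 R2 Hreg Hk Hrho t Ht) as [A [B _]].
  split; auto.
Qed.

Lemma arc_zero p q : a <= p <= b -> a <= q <= b ->
  tX x1 y1 p * (x q - x p) + tY x1 y1 p * (y q - y p) = 0 -> parab p q.
Proof.
  intros Hp Hq H0. unfold parab. rewrite H0.
  destruct (arc_good p Hp) as [G _].
  assert (Hs := arc_sup x y x1 y1 x2 y2 a b R1 R2 C2 Hreg Hk Hrho Harc p q Hp Hq).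
  assert (0 <= tX x1 y1 p * (y q - y p) - tY x1 y1 p * (x q - x p)); [|nra].
  unfold tX, tY.
  replace (x1 p / sqrt (x1 p ^ 2 + y1 p ^ 2) * (y q - y p) -
      y1 p / sqrt (x1 p ^ 2 + y1 p ^ 2) * (x q - x p)) with
      ((x1 p * (y q - y p) - y1 p * (x q - x p)) / sqrt (x1 p ^ 2 + y1 p ^ 2))
      by (field; apply Rgt_not_eq; apply sqrt_lt_R0; auto).
  apply Rdiv_le_0_compat; auto. apply sqrt_lt_R0; auto.
Qed.

Lemma arc_fwd p q : a <= p -> p < q -> q <= b ->
  0 <= tX x1 y1 p * (x q - x p) + tY x1 y1 p * (y q - y p) -> parab p q.
Proof.
  intros H1 H2 H3 H4. destruct H4 as [H4|H4]; [|apply arc_zero; auto; lra].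
  apply (para_fwd x y x1 y1 x2 y2 R2 p q (C2d_of _ _ _ _ _ _ C2) HR2 H2); auto.
  - intros t Ht. apply arc_good. lra.
  - intros s Hs. apply (arc_sup x y x1 y1 x2 y2 a b R1 R2 C2 Hreg Hk Hrho Harc); lra.
Qed.

Lemma arc_bwd p q : a <= q -> q < p -> p <= b ->
  tX x1 y1 p * (x q - x p) + tY x1 y1 p * (y q - y p) <= 0 -> parab p q.
Proof.
  intros H1 H2 H3 H4. destruct H4 as [H4|H4]; [|apply arc_zero; auto; lra].
  apply (para_bwd x y x1 y1 x2 y2 R2 q p (C2d_of _ _ _ _ _ _ C2) HR2 H2); auto.
  - intros t Ht. apply arc_good. lra.
  - intros s Hs. apply (arc_sup x y x1 y1 x2 y2 a b R1 R2 C2 Hreg Hk Hrho Harc); lra.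
Qed.

Lemma arc_mono_u ux uy t1 t2 : a <= t1 -> t1 < t2 -> t2 <= b ->
  (forall t, t1 <= t <= t2 -> 0 < ux * tX x1 y1 t + uy * tY x1 y1 t) ->
  ux * x t1 + uy * y t1 < ux * x t2 + uy * y t2.
Proof.
  intros H1 H2 H3 Hp.
  apply (smono_deriv (fun t => ux * x t + uy * y t) (fun t => ux * x1 t + uy * y1 t)); auto.
  - intros t Ht. apply (is_derive_plus (fun t => ux * x t) (fun t => uy * y t));
      apply is_derive_scal; apply C2.
  - intros t Ht. destruct (arc_good t ltac:(lra)) as [G _].
    specialize (Hp t Ht). unfold tX, tY in Hp.
    assert (Hs : 0 < sqrt (x1 t ^ 2 + y1 t ^ 2)) by (apply sqrt_lt_R0; auto).
    replace (ux * x1 t + uy * y1 t) with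
      (sqrt (x1 t ^ 2 + y1 t ^ 2) * (ux * (x1 t / sqrt (x1 t ^ 2 + y1 t ^ 2)) + uy * (y1 t / sqrt (x1 t ^ 2 + y1 t ^ 2))))
      by (field; lra).
    apply Rmult_lt_0_compat; auto.
Qed.


Lemma unit_frame_id tx ty ux uy Dx Dy : ux ^ 2 + uy ^ 2 = 1 ->
  tx * Dx + ty * Dy = (ux * tx + uy * ty) * (ux * Dx + uy * Dy) + (- uy * tx + ux * ty) * (- uy * Dx + ux * Dy) /\
  tx * Dy - ty * Dx = - (- uy * tx + ux * ty) * (ux * Dx + uy * Dy) + (ux * tx + uy * ty) * (- uy * Dx + ux * Dy).
Proof.
  intros Hu. split.
  - transitivity ((tx * Dx + ty * Dy) * (ux ^ 2 + uy ^ 2)). rewrite Hu; ring. ring.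
  - transitivity ((tx * Dy - ty * Dx) * (ux ^ 2 + uy ^ 2)). rewrite Hu; ring. ring.
Qed.

Lemma arc_main tA tm tB ux uy de w :
  ux ^ 2 + uy ^ 2 = 1 -> 0 < de -> 0 <= w -> 4 * R2 * de < w ^ 2 ->
  a <= tA <= b -> a <= tm <= b -> a <= tB <= b ->
  ux * (x tA - x tm) + uy * (y tA - y tm) < - w ->
  ux * (x tB - x tm) + uy * (y tB - y tm) > w ->
  Rabs (- uy * (x tA - x tm) + ux * (y tA - y tm)) < 2 * de ->
  Rabs (- uy * (x tB - x tm) + ux * (y tB - y tm)) < 2 * de ->
  0 < ux * tX x1 y1 tm + uy * tY x1 y1 tm -> False.
Proof.
  intros Hu Hd Hw Hw2 HtA Htm HtB HaA HaB HbA HbB Hc.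
  destruct Harc as [Hab _].
  assert (unitT : forall t, a <= t <= b -> tX x1 y1 t ^ 2 + tY x1 y1 t ^ 2 = 1).
  { intros t Ht. destruct (arc_good t Ht) as [G _]. apply (frame_unit x1 y1 t G). }
  set (tx := tX x1 y1 tm) in *. set (ty := tY x1 y1 tm) in *.
  set (c := ux * tx + uy * ty) in *. set (s := - uy * tx + ux * ty).
  set (aA := ux * (x tA - x tm) + uy * (y tA - y tm)) in *.
  set (aB := ux * (x tB - x tm) + uy * (y tB - y tm)) in *.
  set (bA := - uy * (x tA - x tm) + ux * (y tA - y tm)) in *.
  set (bB := - uy * (x tB - x tm) + ux * (y tB - y tm)) in *.
  assert (Hcs : c ^ 2 + s ^ 2 = 1).
  { unfold c, s. transitivity ((tx ^ 2 + ty ^ 2) * (ux ^ 2 + uy ^ 2)). ring.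
    unfold tx, ty. rewrite (unitT tm Htm), Hu. ring. }
  assert (Hdet : forall t, a <= t <= b -> 0 <= tx * (y t - y tm) - ty * (x t - x tm)).
  { intros t Ht. destruct (arc_good tm Htm) as [G _].
    assert (Hs := arc_sup x y x1 y1 x2 y2 a b R1 R2 C2 Hreg Hk Hrho Harc tm t Htm Ht).
    unfold tx, ty, tX, tY.
    replace (x1 tm / sqrt (x1 tm ^ 2 + y1 tm ^ 2) * (y t - y tm) -
      y1 tm / sqrt (x1 tm ^ 2 + y1 tm ^ 2) * (x t - x tm)) with
      ((x1 tm * (y t - y tm) - y1 tm * (x t - x tm)) / sqrt (x1 tm ^ 2 + y1 tm ^ 2))
      by (field; apply Rgt_not_eq; apply sqrt_lt_R0; auto).
    apply Rdiv_le_0_compat; auto. apply sqrt_lt_R0; auto. }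
  destruct (unit_frame_id tx ty ux uy (x tA - x tm) (y tA - y tm) Hu) as [IA1 IA2].
  destruct (unit_frame_id tx ty ux uy (x tB - x tm) (y tB - y tm) Hu) as [IB1 IB2].
  fold c s aA aB bA bB in IA1, IA2, IB1, IB2.
  pose proof (Hdet tA HtA) as SA. pose proof (Hdet tB HtB) as SB.
  rewrite IA2 in SA. rewrite IB2 in SB.
  assert (Hc1 : -1 <= c <= 1) by (split; nra).
  destruct (angle_exists x y x1 y1 x2 y2 a b C2 Hab) as [Th [Thm [Tht Threp]]].
  { intros t Ht. apply (arc_good t Ht). }
  { intros t Ht. destruct (curv_facts x1 y1 x2 y2 a b R1 R2 Hreg Hk Hrho t Ht) as [_ [_ D]]. auto. }
  assert (Hspan : Th b - Th a <= PI) by lra.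
  assert (rep_u : forall al, cos al = c -> sin al = s -> forall t, a <= t <= b ->
     ux * tX x1 y1 t + uy * tY x1 y1 t = cos (al + (Th t - Th tm)) /\
     - uy * tX x1 y1 t + ux * tY x1 y1 t = sin (al + (Th t - Th tm))).
  { intros al Hca Hsa t Ht. destruct (Threp tm t Htm Ht) as [R1' R2'].
    fold tx ty in R1', R2'. rewrite R1', R2', cos_plus, sin_plus, Hca, Hsa.
    unfold c, s. split; ring. }
  destruct (Rle_lt_dec 0 s) as [Hs0|Hs0].
  -
    assert (HbB0 : 0 <= bB) by nra.
    destruct (Rtotal_order tB tm) as [Hlt|[Heq|Hgt]].
    + set (al := acos c).
      assert (Hca : cos al = c) by (apply cos_acos; auto).
      assert (Hsa : sin al = s).
      { unfold al. rewrite sin_acos by auto. rewrite <- (sqrt_pow2 s) by auto. f_equal.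
        unfold Rsqr. nra. }
      assert (Hal : 0 <= al < PI / 2).
      { pose proof (acos_bound c). split. unfold al; lra.
        destruct (Rlt_le_dec al (PI / 2)); auto. 
        assert (cos al <= 0) by (apply cos_le_0; unfold al in *; lra). lra. }
      set (psi := fun t => al + (Th t - Th tm)).
      assert (HpB : al - PI <= psi tB) by (unfold psi; pose proof (Thm a tB ltac:(lra) ltac:(lra) ltac:(lra));
         pose proof (Thm tm b ltac:(lra) ltac:(lra) ltac:(lra)); lra).
      destruct (Rlt_le_dec (- (PI / 2)) (psi tB)) as [Hgt2|Hle2].
      * exfalso.
        assert (ux * x tB + uy * y tB < ux * x tm + uy * y tm).
        { apply (arc_mono_u ux uy tB tm); try lra.
          intros t Ht. destruct (rep_u al Hca Hsa t ltac:(lra)) as [E _]. rewrite E.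
          apply cos_gt_0.
          -- pose proof (Thm tB t ltac:(lra) ltac:(lra) ltac:(lra)). unfold psi in Hgt2. lra.
          -- pose proof (Thm t tm ltac:(lra) ltac:(lra) ltac:(lra)). lra. }
        unfold aB in HaB. lra.
      * destruct (rep_u al Hca Hsa tB HtB) as [Ec Es]. fold (psi tB) in Ec, Es.
        assert (Cn : cos (psi tB) <= 0).
        { rewrite <- (Ropp_involutive (cos (psi tB))). rewrite <- neg_cos.
          assert (0 <= cos (psi tB + PI)) by (apply cos_ge_0; lra). lra. }
        assert (Sn : sin (psi tB) <= 0).
        { rewrite <- (Ropp_involutive (sin (psi tB))). rewrite <- neg_sin.
          assert (0 <= sin (psi tB + PI)) by (apply sin_ge_0; lra). lra. }
        destruct (unit_frame_id (tX x1 y1 tB) (tY x1 y1 tB) ux uy (x tm - x tB) (y tm - y tB) Hu) as [J1 _].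
        rewrite Ec, Es in J1.
        assert (Ea : ux * (x tm - x tB) + uy * (y tm - y tB) = - aB) by (unfold aB; ring).
        assert (Eb : - uy * (x tm - x tB) + ux * (y tm - y tB) = - bB) by (unfold bB; ring).
        rewrite Ea, Eb in J1.
        assert (Hpar : parab tB tm).
        { apply arc_fwd; try lra. rewrite J1. nra. }
        apply (final_frame (tX x1 y1 tB) (tY x1 y1 tB) ux uy (x tm - x tB) (y tm - y tB) R2 de w
          (unitT tB HtB) Hu HR2 Hd Hw Hw2).
        -- rewrite Ea, Rabs_Ropp, Rabs_pos_eq; lra.
        -- rewrite Eb, Rabs_Ropp. auto.
        -- rewrite Ea. replace (- tX x1 y1 tB * uy + tY x1 y1 tB * ux) with (sin (psi tB)) by (rewrite <- Es; ring).
           nra.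
        -- exact Hpar.
    + exfalso. subst tB. unfold aB in HaB. replace (x tm - x tm) with 0 in HaB by ring.
      replace (y tm - y tm) with 0 in HaB by ring. lra.
    + assert (Hpar : parab tm tB).
      { apply arc_fwd; try lra. fold tx ty. rewrite IB1. nra. }
      apply (final_frame tx ty ux uy (x tB - x tm) (y tB - y tm) R2 de w
          (unitT tm Htm) Hu HR2 Hd Hw Hw2).
      * fold aB. rewrite Rabs_pos_eq; lra.
      * fold bB. auto.
      * fold aB. replace (- tx * uy + ty * ux) with s by (unfold s; ring). nra.
      * exact Hpar.
  -
    assert (HbA0 : 0 < bA) by nra.
    destruct (Rtotal_order tA tm) as [Hlt|[Heq|Hgt]].
    + assert (Hpar : parab tm tA).
      { apply arc_bwd; try lra. fold tx ty. rewrite IA1. nra. }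
      apply (final_frame tx ty ux uy (x tA - x tm) (y tA - y tm) R2 de w
          (unitT tm Htm) Hu HR2 Hd Hw Hw2).
      * fold aA. rewrite Rabs_left; lra.
      * fold bA. auto.
      * fold aA. replace (- tx * uy + ty * ux) with s by (unfold s; ring). nra.
      * exact Hpar.
    + exfalso. subst tA. unfold aA in HaA. replace (x tm - x tm) with 0 in HaA by ring.
      replace (y tm - y tm) with 0 in HaA by ring. lra.
    + set (al := - acos c).
      assert (Hca : cos al = c) by (unfold al; rewrite cos_neg; apply cos_acos; auto).
      assert (Hsa : sin al = s).
      { unfold al. rewrite sin_neg, sin_acos by auto.
        replace s with (- (- s)) by ring. f_equal. rewrite <- (sqrt_pow2 (- s)) by lra. f_equal.
        unfold Rsqr. nra. }
      assert (Hal : - (PI / 2) < al <= 0).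
      { pose proof (acos_bound c). split; [|unfold al; lra].
        destruct (Rlt_le_dec (- (PI / 2)) al); auto.
        assert (cos (acos c) <= 0) by (apply cos_le_0; unfold al in *; lra).
        rewrite cos_acos in H0 by auto. lra. }
      set (psi := fun t => al + (Th t - Th tm)).
      assert (HpA : psi tA <= al + PI) by (unfold psi; pose proof (Thm a tm ltac:(lra) ltac:(lra) ltac:(lra));
         pose proof (Thm tA b ltac:(lra) ltac:(lra) ltac:(lra)); lra).
      destruct (Rlt_le_dec (psi tA) (PI / 2)) as [Hlt2|Hge2].
      * exfalso.
        assert (ux * x tm + uy * y tm < ux * x tA + uy * y tA).
        { apply (arc_mono_u ux uy tm tA); try lra.
          intros t Ht. destruct (rep_u al Hca Hsa t ltac:(lra)) as [E _]. rewrite E.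
          apply cos_gt_0.
          -- pose proof (Thm tm t ltac:(lra) ltac:(lra) ltac:(lra)). lra.
          -- pose proof (Thm t tA ltac:(lra) ltac:(lra) ltac:(lra)). unfold psi in Hlt2. lra. }
        unfold aA in HaA. lra.
      * destruct (rep_u al Hca Hsa tA HtA) as [Ec Es]. fold (psi tA) in Ec, Es.
        assert (Cn : cos (psi tA) <= 0) by (apply cos_le_0; lra).
        assert (Sn : 0 <= sin (psi tA)) by (apply sin_ge_0; lra).
        destruct (unit_frame_id (tX x1 y1 tA) (tY x1 y1 tA) ux uy (x tm - x tA) (y tm - y tA) Hu) as [J1 _].
        rewrite Ec, Es in J1.
        assert (Ea : ux * (x tm - x tA) + uy * (y tm - y tA) = - aA) by (unfold aA; ring).
        assert (Eb : - uy * (x tm - x tA) + ux * (y tm - y tA) = - bA) by (unfold bA; ring).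
        rewrite Ea, Eb in J1.
        assert (Hpar : parab tA tm).
        { apply arc_bwd; try lra. rewrite J1. nra. }
        apply (final_frame (tX x1 y1 tA) (tY x1 y1 tA) ux uy (x tm - x tA) (y tm - y tA) R2 de w
          (unitT tA HtA) Hu HR2 Hd Hw Hw2).
        -- rewrite Ea, Rabs_Ropp, Rabs_left; lra.
        -- rewrite Eb, Rabs_Ropp. auto.
        -- rewrite Ea. replace (- tX x1 y1 tA * uy + tY x1 y1 tA * ux) with (sin (psi tA)) by (rewrite <- Es; ring).
           nra.
        -- exact Hpar.
Qed.


Lemma arc_c0 tA tm tB ux uy :
  ux ^ 2 + uy ^ 2 = 1 -> a <= tA <= b -> a <= tm <= b -> a <= tB <= b ->
  ux * (x tA - x tm) + uy * (y tA - y tm) < 0 ->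
  ux * (x tB - x tm) + uy * (y tB - y tm) > 0 ->
  ux * tX x1 y1 tm + uy * tY x1 y1 tm = 0 -> False.
Proof.
  intros Hu HtA Htm HtB HaA HaB Hc.
  assert (unitT : tX x1 y1 tm ^ 2 + tY x1 y1 tm ^ 2 = 1).
  { destruct (arc_good tm Htm) as [G _]. apply (frame_unit x1 y1 tm G). }
  set (tx := tX x1 y1 tm) in *. set (ty := tY x1 y1 tm) in *.
  assert (Hdet : forall t, a <= t <= b -> 0 <= tx * (y t - y tm) - ty * (x t - x tm)).
  { intros t Ht. destruct (arc_good tm Htm) as [G _].
    assert (Hs := arc_sup x y x1 y1 x2 y2 a b R1 R2 C2 Hreg Hk Hrho Harc tm t Htm Ht).
    unfold tx, ty, tX, tY.
    replace (x1 tm / sqrt (x1 tm ^ 2 + y1 tm ^ 2) * (y t - y tm) -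
      y1 tm / sqrt (x1 tm ^ 2 + y1 tm ^ 2) * (x t - x tm)) with
      ((x1 tm * (y t - y tm) - y1 tm * (x t - x tm)) / sqrt (x1 tm ^ 2 + y1 tm ^ 2))
      by (field; apply Rgt_not_eq; apply sqrt_lt_R0; auto).
    apply Rdiv_le_0_compat; auto. apply sqrt_lt_R0; auto. }
  destruct (unit_frame_id tx ty ux uy (x tA - x tm) (y tA - y tm) Hu) as [_ IA2].
  destruct (unit_frame_id tx ty ux uy (x tB - x tm) (y tB - y tm) Hu) as [_ IB2].
  pose proof (Hdet tA HtA) as SA. pose proof (Hdet tB HtB) as SB.
  rewrite IA2, Hc in SA. rewrite IB2, Hc in SB.
  set (s := - uy * tx + ux * ty) in *.
  assert (s = 0) by nra.
  assert (Hcs : (ux * tx + uy * ty) ^ 2 + s ^ 2 = 1).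
  { unfold s. transitivity ((tx ^ 2 + ty ^ 2) * (ux ^ 2 + uy ^ 2)). ring.
    rewrite unitT, Hu. ring. }
  rewrite Hc, H in Hcs. lra.
Qed.

End ArcMain.

Lemma GEO : forall x y x1 y1 x2 y2 a b R1 R2 dL delta (XA Xm XB : pt) (tA tm tB ux uy pA qB : R),
  C2_param x y x1 y1 x2 y2 -> regular_on x1 y1 x2 y2 a b ->
  (forall t, a <= t <= b -> 0 < curvature x1 y1 x2 y2 t) ->
  (closed_convex_curve x y a b \/
   (convex_arc x y a b /\ total_curvature x1 y1 x2 y2 a b <= PI)) ->
  0 < R1 -> R1 <= R2 ->
  (forall t, a <= t <= b -> R1 <= 1 / curvature x1 y1 x2 y2 t <= R2) ->
  0 < dL -> 0 < delta ->
  delta < dL ^ 2 / (2 * (R2 + dL + sqrt ((R2 + dL) ^ 2 - dL ^ 2))) ->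
  ux ^ 2 + uy ^ 2 = 1 -> dL <= pA -> dL <= qB ->
  XA = (fst Xm - pA * ux, snd Xm - pA * uy) -> XB = (fst Xm + qB * ux, snd Xm + qB * uy) ->
  a <= tA <= b -> a <= tm <= b -> a <= tB <= b ->
  dist2 (x tA, y tA) XA < delta -> dist2 (x tm, y tm) Xm < delta -> dist2 (x tB, y tB) XB < delta ->
  False.
Proof.
  intros x y x1 y1 x2 y2 a b R1 R2 dL de XA Xm XB tA tm tB ux uy pA qB
    C2 Hreg Hk Hcase HR1 HR12 Hrho HdL Hde Hb Hu HpA HqB EA EB HtA Htm HtB DA Dm DB.
  assert (HR2 : 0 < R2) by lra.
  destruct (numeric_w R2 dL de HR2 HdL Hde Hb) as [Hw Hw2].
  set (w := dL - 2 * de) in *.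
  destruct (proj_bound ux uy _ _ de Hu DA) as [eAu eAn].
  destruct (proj_bound ux uy _ _ de Hu Dm) as [emu emn].
  destruct (proj_bound ux uy _ _ de Hu DB) as [eBu eBn].
  subst XA XB. cbn [fst snd] in *.
  apply Rabs_def2 in eAu, eAn, emu, emn, eBu, eBn.
  assert (HaA : ux * (x tA - x tm) + uy * (y tA - y tm) < - w).
  { replace (ux * (x tA - x tm) + uy * (y tA - y tm)) with
      ((ux * (x tA - (fst Xm - pA * ux)) + uy * (y tA - (snd Xm - pA * uy)))
       - (ux * (x tm - fst Xm) + uy * (y tm - snd Xm)) - pA * (ux ^ 2 + uy ^ 2)) by ring.
    rewrite Hu. unfold w. lra. }
  assert (HaB : ux * (x tB - x tm) + uy * (y tB - y tm) > w).
  { replace (ux * (x tB - x tm) + uy * (y tB - y tm)) with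
      ((ux * (x tB - (fst Xm + qB * ux)) + uy * (y tB - (snd Xm + qB * uy)))
       - (ux * (x tm - fst Xm) + uy * (y tm - snd Xm)) + qB * (ux ^ 2 + uy ^ 2)) by ring.
    rewrite Hu. unfold w. lra. }
  assert (HbA : Rabs (- uy * (x tA - x tm) + ux * (y tA - y tm)) < 2 * de).
  { replace (- uy * (x tA - x tm) + ux * (y tA - y tm)) with
      ((- uy * (x tA - (fst Xm - pA * ux)) + ux * (y tA - (snd Xm - pA * uy)))
       - (- uy * (x tm - fst Xm) + ux * (y tm - snd Xm))) by ring.
    apply Rabs_def1; lra. }
  assert (HbB : Rabs (- uy * (x tB - x tm) + ux * (y tB - y tm)) < 2 * de).
  { replace (- uy * (x tB - x tm) + ux * (y tB - y tm)) with
      ((- uy * (x tB - (fst Xm + qB * ux)) + ux * (y tB - (snd Xm + qB * uy)))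
       - (- uy * (x tm - fst Xm) + ux * (y tm - snd Xm))) by ring.
    apply Rabs_def1; lra. }
  assert (Hw0 : 0 <= w) by lra.
  destruct Hcase as [Hcl|[Harc Htot]].
  - assert (unitT : tX x1 y1 tm ^ 2 + tY x1 y1 tm ^ 2 = 1).
    { destruct (cl_good x y x1 y1 x2 y2 a b R1 R2 C2 Hreg Hk Hrho Hcl tm) as [[G _] _].
      pose proof (cl_ab x y a b Hcl). lra. apply (frame_unit x1 y1 tm G). }
    destruct (Rle_lt_dec 0 (- tX x1 y1 tm * uy + tY x1 y1 tm * ux)) as [Hs|Hs].
    + apply (final_frame (tX x1 y1 tm) (tY x1 y1 tm) ux uy (x tB - x tm) (y tB - y tm) R2 de w
          unitT Hu HR2 Hde Hw0 Hw2).
      * rewrite Rabs_pos_eq; lra.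
      * auto.
      * apply Rmult_le_pos; lra.
      * apply (cl_para x y x1 y1 x2 y2 a b R1 R2 C2 Hreg Hk Hrho Hcl tm tB Htm HtB HR2).
    + apply (final_frame (tX x1 y1 tm) (tY x1 y1 tm) ux uy (x tA - x tm) (y tA - y tm) R2 de w
          unitT Hu HR2 Hde Hw0 Hw2).
      * rewrite Rabs_left; lra.
      * auto.
      * nra.
      * apply (cl_para x y x1 y1 x2 y2 a b R1 R2 C2 Hreg Hk Hrho Hcl tm tA Htm HtA HR2).
  - destruct (Rtotal_order (ux * tX x1 y1 tm + uy * tY x1 y1 tm) 0) as [Hc|[Hc|Hc]].
    + apply (arc_main x y x1 y1 x2 y2 a b R1 R2 C2 Hreg Hk Hrho Harc Htot HR2 tB tm tA (- ux) (- uy) de w);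
        auto; try lra.
      * replace (- (- uy) * (x tB - x tm) + - ux * (y tB - y tm)) with
          (- (- uy * (x tB - x tm) + ux * (y tB - y tm))) by ring. rewrite Rabs_Ropp; auto.
      * replace (- (- uy) * (x tA - x tm) + - ux * (y tA - y tm)) with
          (- (- uy * (x tA - x tm) + ux * (y tA - y tm))) by ring. rewrite Rabs_Ropp; auto.
    + apply (arc_c0 x y x1 y1 x2 y2 a b R1 R2 C2 Hreg Hk Hrho Harc tA tm tB ux uy); auto; lra.
    + apply (arc_main x y x1 y1 x2 y2 a b R1 R2 C2 Hreg Hk Hrho Harc Htot HR2 tA tm tB ux uy de w); auto.
Qed.

Definition n2 (p : pt) := sqrt (fst p ^ 2 + snd p ^ 2).

Lemma det_bound (a b : pt) : Rabs (det2 a b) <= n2 a * n2 b.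
Proof.
  unfold n2, det2. destruct a as [a1 a2], b as [b1 b2]; simpl.
  rewrite <- sqrt_mult by (apply Rplus_le_le_0_compat; apply pow2_ge_0).
  rewrite <- (sqrt_pow2 (Rabs _)) by apply Rabs_pos. apply sqrt_le_1_alt.
  rewrite pow2_abs. pose proof (pow2_ge_0 (a1 * b1 + a2 * b2)).
  assert ((a1 * b2 - a2 * b1) ^ 2 + (a1 * b1 + a2 * b2) ^ 2 = (a1 ^ 2 + a2 ^ 2) * (b1 ^ 2 + b2 ^ 2)) by ring.
  lra.
Qed.

Lemma det_bound_d (a b : pt) d : n2 b <= d -> Rabs (det2 a b) <= n2 a * d.
Proof.
  intros H. eapply Rle_trans. apply det_bound. apply Rmult_le_compat_l; auto. apply sqrt_pos.
Qed.

Lemma perturb (P1 P2 P3 Q1 Q2 Q3 : pt) d AL :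
  dist2 P1 Q1 < d -> dist2 P2 Q2 < d -> dist2 P3 Q3 < d ->
  AL <= Rabs (det2 (vsub Q2 Q1) (vsub Q3 Q1)) ->
  tri_area P1 P2 P3 >= AL / 2 - (dist2 P2 P1 + dist2 P3 P2) * d - 3 / 2 * d ^ 2.
Proof.
  intros H1 H2 H3 HA.
  set (e1 := vsub Q1 P1). set (e2 := vsub Q2 P2). set (e3 := vsub Q3 P3).
  set (U := vsub P2 P1). set (V := vsub P3 P2).
  assert (E : forall P Q, dist2 P Q = n2 (vsub Q P)).
  { intros [p1 p2] [q1 q2]. unfold dist2, n2, vsub; simpl. f_equal. ring. }
  rewrite E in H1, H2, H3. fold e1 e2 e3 in H1, H2, H3.
  assert (dP2P1 : dist2 P2 P1 = n2 U).
  { destruct P1, P2. unfold dist2, n2, U, vsub; simpl. reflexivity. }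
  assert (dP3P2 : dist2 P3 P2 = n2 V).
  { destruct P3, P2. unfold dist2, n2, V, vsub; simpl. reflexivity. }
  rewrite dP2P1, dP3P2.
  assert (Hid : det2 (vsub Q2 Q1) (vsub Q3 Q1) = det2 (vsub P2 P1) (vsub P3 P1)
     + (det2 U e3 - det2 U e2) + (det2 e2 V - det2 e1 V) + (det2 e2 e3 - det2 e1 e3 + det2 e1 e2)).
  { unfold U, V, e1, e2, e3, det2, vsub; destruct P1, P2, P3, Q1, Q2, Q3; simpl. ring. }
  rewrite Hid in HA.
  pose proof (det_bound_d U e3 d ltac:(lra)). pose proof (det_bound_d U e2 d ltac:(lra)).
  assert (Hs : forall a b, Rabs (det2 a b) = Rabs (det2 b a)).
  { intros [a1 a2] [b1 b2]. unfold det2; simpl. rewrite <- Rabs_Ropp. f_equal. ring. }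
  pose proof (det_bound_d V e2 d ltac:(lra)). pose proof (det_bound_d V e1 d ltac:(lra)).
  rewrite Hs in H4, H5.
  pose proof (det_bound_d e2 e3 d ltac:(lra)). pose proof (det_bound_d e1 e3 d ltac:(lra)).
  pose proof (det_bound_d e1 e2 d ltac:(lra)).
  assert (n2 e1 * d <= d * d) by (apply Rmult_le_compat_r; [pose proof (sqrt_pos (fst e1 ^ 2 + snd e1 ^ 2)); unfold n2 in *; lra|lra]).
  assert (n2 e2 * d <= d * d) by (apply Rmult_le_compat_r; [pose proof (sqrt_pos (fst e1 ^ 2 + snd e1 ^ 2)); unfold n2 in *; lra|lra]).
  unfold tri_area.
  assert (Rabs (det2 (vsub P2 P1) (vsub P3 P1) + (det2 U e3 - det2 U e2) + (det2 e2 V - det2 e1 V) +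
      (det2 e2 e3 - det2 e1 e3 + det2 e1 e2)) <= Rabs (det2 (vsub P2 P1) (vsub P3 P1)) +
      (Rabs (det2 U e3) + Rabs (det2 U e2)) + (Rabs (det2 e2 V) + Rabs (det2 e1 V)) +
      (Rabs (det2 e2 e3) + Rabs (det2 e1 e3) + Rabs (det2 e1 e2))).
  { apply Rabs_le.
    pose proof (proj1 (Rabs_le_between _ _) (Rle_refl (Rabs (det2 (vsub P2 P1) (vsub P3 P1))))).
    pose proof (proj1 (Rabs_le_between _ _) (Rle_refl (Rabs (det2 U e3)))).
    pose proof (proj1 (Rabs_le_between _ _) (Rle_refl (Rabs (det2 U e2)))).
    pose proof (proj1 (Rabs_le_between _ _) (Rle_refl (Rabs (det2 e2 V)))).
    pose proof (proj1 (Rabs_le_between _ _) (Rle_refl (Rabs (det2 e1 V)))).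
    pose proof (proj1 (Rabs_le_between _ _) (Rle_refl (Rabs (det2 e2 e3)))).
    pose proof (proj1 (Rabs_le_between _ _) (Rle_refl (Rabs (det2 e1 e3)))).
    pose proof (proj1 (Rabs_le_between _ _) (Rle_refl (Rabs (det2 e1 e2)))).
    lra. }
  unfold Rdiv. lra.
Qed.

Lemma lattice_det v0 v1 v2 P1 P2 P3 :
  lattice_pt v0 v1 v2 P1 -> lattice_pt v0 v1 v2 P2 -> lattice_pt v0 v1 v2 P3 ->
  exists k : Z, det2 (vsub P2 P1) (vsub P3 P1) = IZR k * det2 v1 v2.
Proof.
  intros [m1 [n1 ->]] [m2 [n2 ->]] [m3 [n3 ->]].
  exists ((m2 - m1) * (n3 - n1) - (n2 - n1) * (m3 - m1))%Z.
  unfold det2, vsub; simpl. rewrite minus_IZR, !mult_IZR, !minus_IZR. ring.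
Qed.

Lemma IZR_abs_ge1 k : IZR k <> 0 -> 1 <= Rabs (IZR k).
Proof.
  intros H. assert (k <> 0%Z) by (intro; subst; apply H; reflexivity).
  destruct (Z_lt_le_dec 0 k).
  - rewrite Rabs_pos_eq. apply IZR_le. lia. apply IZR_le. lia.
  - rewrite Rabs_left. assert (IZR k <= -1) by (apply IZR_le; lia). lra.
    apply IZR_lt. lia.
Qed.

Lemma main_from_noncol v0 v1 v2 P1' P2' P3' P1 P2 P3 delta :
  lattice_pt v0 v1 v2 P1' -> lattice_pt v0 v1 v2 P2' -> lattice_pt v0 v1 v2 P3' ->
  det2 (vsub P2' P1') (vsub P3' P1') <> 0 ->
  dist2 P1 P1' < delta -> dist2 P2 P2' < delta -> dist2 P3 P3' < delta ->
  tri_area P1 P2 P3 >=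
    lattice_area v1 v2 / 2 - (dist2 P2 P1 + dist2 P3 P2) * delta
      - 3 / 2 * delta ^ 2.
Proof.
  intros L1 L2 L3 Hnc D1 D2 D3.
  apply (perturb P1 P2 P3 P1' P2' P3'); auto.
  destruct (lattice_det v0 v1 v2 P1' P2' P3' L1 L2 L3) as [k Hk].
  rewrite Hk in *. unfold lattice_area. rewrite Rabs_mult.
  assert (IZR k <> 0) by (intro E; apply Hnc; rewrite E; ring).
  pose proof (IZR_abs_ge1 k H). pose proof (Rabs_pos (det2 v1 v2)). nra.
Qed.

Lemma pt_eq (A B : pt) : fst A = fst B -> snd A = snd B -> A = B.
Proof. destruct A, B; simpl; intros; subst; auto. Qed.

Lemma collinear_mid (A B C : pt) : A <> B -> B <> C -> A <> C ->
  det2 (vsub B A) (vsub C A) = 0 ->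
  exists ux uy, ux ^ 2 + uy ^ 2 = 1 /\
   ((exists p q, 0 < p /\ 0 < q /\ C = (fst A - p * ux, snd A - p * uy) /\ B = (fst A + q * ux, snd A + q * uy))
 \/ (exists p q, 0 < p /\ 0 < q /\ A = (fst B - p * ux, snd B - p * uy) /\ C = (fst B + q * ux, snd B + q * uy))
 \/ (exists p q, 0 < p /\ 0 < q /\ A = (fst C - p * ux, snd C - p * uy) /\ B = (fst C + q * ux, snd C + q * uy))).
Proof.
  intros HAB HBC HAC Hd.
  destruct A as [a1 a2], B as [b1 b2], C as [c1 c2]. unfold det2, vsub in Hd; simpl in Hd.
  set (v1 := b1 - a1) in *. set (v2 := b2 - a2) in *.
  set (w1 := c1 - a1) in *. set (w2 := c2 - a2) in *.
  assert (Hn : 0 < v1 ^ 2 + v2 ^ 2).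
  { destruct (Req_dec v1 0); destruct (Req_dec v2 0).
    - exfalso. apply HAB. f_equal; unfold v1, v2 in *; lra.
    - pose proof (pow2_ge_0 v1). assert (0 < v2 ^ 2) by (pose proof (Rsqr_pos_lt v2 H0); unfold Rsqr in *; simpl; lra). lra.
    - pose proof (pow2_ge_0 v2). assert (0 < v1 ^ 2) by (pose proof (Rsqr_pos_lt v1 H); unfold Rsqr in *; simpl; lra). lra.
    - pose proof (pow2_ge_0 v2). assert (0 < v1 ^ 2) by (pose proof (Rsqr_pos_lt v1 H); unfold Rsqr in *; simpl; lra). lra. }
  set (n1 := sqrt (v1 ^ 2 + v2 ^ 2)).
  assert (Hn1 : 0 < n1) by (apply sqrt_lt_R0; auto).
  assert (Hn2 : n1 ^ 2 = v1 ^ 2 + v2 ^ 2) by (apply pow2_sqrt; lra).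
  set (lam := (v1 * w1 + v2 * w2) / (v1 ^ 2 + v2 ^ 2)).
  assert (Hw1 : w1 = lam * v1).
  { unfold lam. apply (Rmult_eq_reg_r (v1 ^ 2 + v2 ^ 2)); [|lra]. field_simplify; [|lra].
    assert (v2 * (v1 * w2 - v2 * w1) = 0) by (rewrite Hd; ring). nra. }
  assert (Hw2 : w2 = lam * v2).
  { unfold lam. apply (Rmult_eq_reg_r (v1 ^ 2 + v2 ^ 2)); [|lra]. field_simplify; [|lra].
    assert (v1 * (v1 * w2 - v2 * w1) = 0) by (rewrite Hd; ring). nra. }
  exists (v1 / n1), (v2 / n1). split.
  { field_simplify; [|lra]. rewrite Hn2. field. lra. }
  destruct (Rtotal_order lam 0) as [Hl|[Hl|Hl]].
  - left. exists (- lam * n1), n1. split. nra. split. lra. split.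
    + f_equal; simpl; unfold w1, w2, v1, v2 in *; field_simplify; try lra; nra.
    + f_equal; simpl; unfold v1, v2; field; lra.
  - exfalso. apply HAC. f_equal; unfold w1, w2 in *; rewrite Hl in *; lra.
  - destruct (Rtotal_order lam 1) as [Hl1|[Hl1|Hl1]].
    + right; right. exists (lam * n1), ((1 - lam) * n1). split. nra. split. nra. split.
      * f_equal; simpl; unfold w1, w2, v1, v2 in *; field_simplify; try lra; nra.
      * f_equal; simpl; unfold w1, w2, v1, v2 in *; field_simplify; try lra; nra.
    + exfalso. apply HBC. f_equal; unfold w1, w2, v1, v2 in *; rewrite Hl1 in *; lra.
    + right; left. exists n1, ((lam - 1) * n1). split. lra. split. nra. split.
      * f_equal; simpl; unfold v1, v2; field; lra.
      * f_equal; simpl; unfold w1, w2, v1, v2 in *; field_simplify; try lra; nra.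
Qed.

Lemma dist_shift (X : pt) p ux uy : 0 < p -> ux ^ 2 + uy ^ 2 = 1 ->
  dist2 (fst X - p * ux, snd X - p * uy) X = p /\ dist2 (fst X + p * ux, snd X + p * uy) X = p.
Proof.
  intros Hp Hu. unfold dist2; cbn [fst snd]. split.
  - replace ((fst X - p * ux - fst X) ^ 2 + (snd X - p * uy - snd X) ^ 2) with (p ^ 2) by
      (replace (p ^ 2) with (p ^ 2 * (ux ^ 2 + uy ^ 2)) by (rewrite Hu; ring); ring).
    apply sqrt_pow2. lra.
  - replace ((fst X + p * ux - fst X) ^ 2 + (snd X + p * uy - snd X) ^ 2) with (p ^ 2) by
      (replace (p ^ 2) with (p ^ 2 * (ux ^ 2 + uy ^ 2)) by (rewrite Hu; ring); ring).
    apply sqrt_pow2. lra.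
Qed.

Lemma dist_pos (P Q : pt) : P <> Q -> 0 < dist2 P Q.
Proof.
  intros H. unfold dist2. apply sqrt_lt_R0.
  destruct (Req_dec (fst P) (fst Q)); destruct (Req_dec (snd P) (snd Q)).
  - exfalso; apply H; apply pt_eq; auto.
  - pose proof (pow2_ge_0 (fst P - fst Q)).
    assert (0 < (snd P - snd Q) ^ 2) by (pose proof (Rsqr_pos_lt (snd P - snd Q) ltac:(lra)); unfold Rsqr in *; simpl; lra). lra.
  - pose proof (pow2_ge_0 (snd P - snd Q)).
    assert (0 < (fst P - fst Q) ^ 2) by (pose proof (Rsqr_pos_lt (fst P - fst Q) ltac:(lra)); unfold Rsqr in *; simpl; lra). lra.
  - pose proof (pow2_ge_0 (snd P - snd Q)).
    assert (0 < (fst P - fst Q) ^ 2) by (pose proof (Rsqr_pos_lt (fst P - fst Q) ltac:(lra)); unfold Rsqr in *; simpl; lra). lra.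
Qed.

Theorem lemma7p5
  (x y x1 y1 x2 y2 : R -> R) (a b R1 R2 : R)
  (v0 v1 v2 : pt) (dL delta : R)
  (P1' P2' P3' P1 P2 P3 : pt) :
  C2_param x y x1 y1 x2 y2 ->
  regular_on x1 y1 x2 y2 a b ->
  (forall t, a <= t <= b -> 0 < curvature x1 y1 x2 y2 t) ->
  (closed_convex_curve x y a b \/
   (convex_arc x y a b /\ total_curvature x1 y1 x2 y2 a b <= PI)) ->
  0 < R1 -> R1 <= R2 ->
  (forall t, a <= t <= b ->
     R1 <= 1 / curvature x1 y1 x2 y2 t <= R2) ->
  det2 v1 v2 <> 0 ->
  is_lattice_min_dist v0 v1 v2 dL ->
  lattice_pt v0 v1 v2 P1' -> lattice_pt v0 v1 v2 P2' -> lattice_pt v0 v1 v2 P3' ->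
  P1' <> P2' -> P2' <> P3' -> P1' <> P3' ->
  0 < delta ->
  delta < dL ^ 2 / (2 * (R2 + dL + sqrt ((R2 + dL) ^ 2 - dL ^ 2))) ->
  Rbar_lt (dist_curve x y a b P1') delta ->
  Rbar_lt (dist_curve x y a b P2') delta ->
  Rbar_lt (dist_curve x y a b P3') delta ->
  on_curve x y a b P1 -> on_curve x y a b P2 -> on_curve x y a b P3 ->
  dist2 P1 P1' < delta -> dist2 P2 P2' < delta -> dist2 P3 P3' < delta ->
  tri_area P1 P2 P3 >=
    lattice_area v1 v2 / 2 - (dist2 P2 P1 + dist2 P3 P2) * delta
      - 3 / 2 * delta ^ 2.
Proof.
  intros C2 Hreg Hk Hcase HR1 HR12 Hrho Hdet [[PP [QQ [LP [LQ [HPQ HdPQ]]]]] Hmin]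
    L1 L2 L3 N12 N23 N13 Hd Hdb _ _ _ [t1 [Ht1 E1]] [t2 [Ht2 E2]] [t3 [Ht3 E3]] D1 D2 D3.
  apply (main_from_noncol v0 v1 v2 P1' P2' P3' P1 P2 P3 delta L1 L2 L3); auto.
  intro Hcol.
  assert (HdL : 0 < dL) by (rewrite <- HdPQ; apply dist_pos; auto).
  assert (Hsym : forall P Q, dist2 P Q = dist2 Q P).
  { intros [p1 p2] [q1 q2]; unfold dist2; simpl. f_equal. ring. }
  assert (G := fun XA Xm XB tA tm tB ux uy pA qB =>
    GEO x y x1 y1 x2 y2 a b R1 R2 dL delta XA Xm XB tA tm tB ux uy pA qB
      C2 Hreg Hk Hcase HR1 HR12 Hrho HdL Hd Hdb).
  destruct (collinear_mid P1' P2' P3' N12 N23 N13 Hcol) as [ux [uy [Hu [[p [q [Hp [Hq [EA EB]]]]]|[[p [q [Hp [Hq [EA EB]]]]]|[p [q [Hp [Hq [EA EB]]]]]]]]]].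
  -
    apply (G P3' P1' P2' t3 t1 t2 ux uy p q Hu); auto.
    + destruct (dist_shift P1' p ux uy Hp Hu) as [E _]. rewrite <- E, <- EA.
      apply Hmin; auto.
    + destruct (dist_shift P1' q ux uy Hq Hu) as [_ E]. rewrite <- E, <- EB.
      apply Hmin; auto.
    + rewrite <- E3; auto.
    + rewrite <- E1; auto.
    + rewrite <- E2; auto.
  - apply (G P1' P2' P3' t1 t2 t3 ux uy p q Hu); auto.
    + destruct (dist_shift P2' p ux uy Hp Hu) as [E _]. rewrite <- E, <- EA.
      apply Hmin; auto.
    + destruct (dist_shift P2' q ux uy Hq Hu) as [_ E]. rewrite <- E, <- EB.
      apply Hmin; auto.
    + rewrite <- E1; auto.
    + rewrite <- E2; auto.
    + rewrite <- E3; auto.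
  - apply (G P1' P3' P2' t1 t3 t2 ux uy p q Hu); auto.
    + destruct (dist_shift P3' p ux uy Hp Hu) as [E _]. rewrite <- E, <- EA.
      apply Hmin; auto.
    + destruct (dist_shift P3' q ux uy Hq Hu) as [_ E]. rewrite <- E, <- EB.
      apply Hmin; auto.
    + rewrite <- E1; auto.
    + rewrite <- E3; auto.
    + rewrite <- E2; auto.
Qed.
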